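(* The group $G_{sm}=H_9\times S_{sm}$ has exactly three orbits on the set of semi-magic Sudoku boards.
   Context: A Sudoku board is a $9\times 9$ array with entries from $\{0,\dots,8\}$ such that every row, every column and every one of the nine $3\times 3$ blocks contains each symbol exactly once. A semi-magic Sudoku board is a Sudoku board in which, in every block, each of the three rows and each of the three columns of the block has entry sum $12$. $H_9$ is the group of cell rearrangements (acting on boards by moving entries) generated by permutations of the three bands (horizontal strips of blocks), permutations of the rows within a band, permutations of the three pillars (vertical strips of blocks), permutations of the columns within a pillar, and the transpose. A relabeling is a permutation of the symbols $\{0,\dots,8\}$ applied to every entry; $S_{sm}$ is the group of relabelings that map every semi-magic Sudoku board to a semi-magic Sudoku board (it has order $72$). *)

(* Defs.v *)
From mathcomp Require Import all_boot all_order all_fingroup.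
Set Implicit Arguments. Unset Strict Implicit. Unset Printing Implicit Defensive.

Local Open Scope nat_scope.

(* A row index of the 9x9 array is encoded as a pair (band, row-in-band)
   : 'I_3 * 'I_3, standing for row 3*band + row-in-band; likewise a column
   index is (pillar, column-in-pillar). *)
Definition idx := ('I_3 * 'I_3)%type.
Definition cell := (idx * idx)%type.

Definition board := {ffun cell -> 'I_9}.

Definition sudoku (B : board) : bool :=
  [forall R : idx, forall s : 'I_9, #|[set C : idx | B (R, C) == s]| == 1]
  && [forall C : idx, forall s : 'I_9, #|[set R : idx | B (R, C) == s]| == 1]
  && [forall b : 'I_3, forall p : 'I_3, forall s : 'I_9,
        #|[set rc : 'I_3 * 'I_3 | B ((b, rc.1), (p, rc.2)) == s]| == 1].

Definition semimagic (B : board) : bool :=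
  sudoku B
  && [forall b : 'I_3, forall p : 'I_3, forall r : 'I_3,
        \sum_(c < 3) nat_of_ord (B ((b, r), (p, c))) == 12]
  && [forall b : 'I_3, forall p : 'I_3, forall c : 'I_3,
        \sum_(r < 3) nat_of_ord (B ((b, r), (p, c))) == 12].

Definition band_fun (sg : {perm 'I_3}) (x : idx) : idx := (sg x.1, x.2).
Lemma band_fun_inj sg : injective (band_fun sg).
Proof. by move=> [a b] [c d] [/perm_inj -> ->]. Qed.

Definition inband_fun (b : 'I_3) (tau : {perm 'I_3}) (x : idx) : idx :=
  (x.1, if x.1 == b then tau x.2 else x.2).
Lemma inband_fun_inj b tau : injective (inband_fun b tau).
Proof.
move=> [a c] [a' c'] [/= ea]; subst a'.
case: (a == b) => [/perm_inj -> // | -> //].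
Qed.

Definition rows_fun (f : idx -> idx) (x : cell) : cell := (f x.1, x.2).
Definition cols_fun (f : idx -> idx) (x : cell) : cell := (x.1, f x.2).
Lemma rows_fun_inj f : injective f -> injective (rows_fun f).
Proof. by move=> fi [a b] [c d] [/fi -> ->]. Qed.
Lemma cols_fun_inj f : injective f -> injective (cols_fun f).
Proof. by move=> fi [a b] [c d] [-> /fi ->]. Qed.

Definition transp_fun (x : cell) : cell := (x.2, x.1).
Lemma transp_fun_inj : injective transp_fun.
Proof. by move=> [a b] [c d] [-> ->]. Qed.

Definition band_perm sg : {perm cell} :=
  perm (@rows_fun_inj _ (@band_fun_inj sg)).
Definition rowin_perm b tau : {perm cell} :=
  perm (@rows_fun_inj _ (@inband_fun_inj b tau)).
Definition pillar_perm sg : {perm cell} :=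
  perm (@cols_fun_inj _ (@band_fun_inj sg)).
Definition colin_perm b tau : {perm cell} :=
  perm (@cols_fun_inj _ (@inband_fun_inj b tau)).
Definition transpose_perm : {perm cell} := perm transp_fun_inj.

Definition H9_gens : {set {perm cell}} :=
  [set band_perm sg | sg : {perm 'I_3}]
  :|: [set rowin_perm bt.1 bt.2 | bt : 'I_3 * {perm 'I_3}]
  :|: [set pillar_perm sg | sg : {perm 'I_3}]
  :|: [set colin_perm bt.1 bt.2 | bt : 'I_3 * {perm 'I_3}]
  :|: [set transpose_perm].

Definition H9 : {group {perm cell}} := <<H9_gens>>%G.

Definition rearrange (g : {perm cell}) (B : board) : board :=
  [ffun x => B ((g^-1)%g x)].

Definition relabel (s : {perm 'I_9}) (B : board) : board :=
  [ffun x => s (B x)].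

Definition S_sm : {set {perm 'I_9}} :=
  [set s : {perm 'I_9} | [forall B : board, semimagic B ==> semimagic (relabel s B)]].

(* Orbit of B under G_sm = H_9 x S_sm acting by (h, s).B = s o B o h^-1. *)
Definition Gsm_orbit (B : board) : {set board} :=
  [set B' : board | [exists h in H9, exists s in S_sm,
                       B' == relabel s (rearrange h B)]].

Definition semimagic_boards : {set board} := [set B : board | semimagic B].

(* Main.v *)
Require Import Defs.
From mathcomp Require Import all_boot all_order all_fingroup.
From mathcomp Require Import zify.
Set Implicit Arguments. Unset Strict Implicit. Unset Printing Implicit Defensive.
Local Open Scope nat_scope.

Lemma rearrE g B x : rearrange g B x = B ((g^-1)%g x).
Proof. by rewrite ffunE. Qed.
Lemma relabE s B x : relabel s B x = s (B x).
Proof. by rewrite ffunE. Qed.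

Lemma rearrM g h B : rearrange (g * h)%g B = rearrange h (rearrange g B).
Proof. by apply/ffunP=> x; rewrite !ffunE invMg permM. Qed.
Lemma rearr1 B : rearrange 1%g B = B.
Proof. by apply/ffunP=> x; rewrite !ffunE invg1 perm1. Qed.
Lemma relabM s t B : relabel (s * t)%g B = relabel t (relabel s B).
Proof. by apply/ffunP=> x; rewrite !ffunE permM. Qed.
Lemma relab1 B : relabel 1%g B = B.
Proof. by apply/ffunP=> x; rewrite !ffunE perm1. Qed.
Lemma relab_rearr s g B : relabel s (rearrange g B) = rearrange g (relabel s B).
Proof. by apply/ffunP=> x; rewrite !ffunE. Qed.

Lemma S_smP s : reflect (forall B, semimagic B -> semimagic (relabel s B)) (s \in S_sm).
Proof.
rewrite inE; apply: (iffP forallP) => H B.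
  by move=> sB; have := H B; rewrite sB.
by apply/implyP; apply: H.
Qed.

Lemma S_sm1 : 1%g \in S_sm.
Proof. by apply/S_smP=> B; rewrite relab1. Qed.
Lemma S_smM s t : s \in S_sm -> t \in S_sm -> (s * t)%g \in S_sm.
Proof.
move=> /S_smP Hs /S_smP Ht; apply/S_smP=> B sB; rewrite relabM; exact/Ht/Hs.
Qed.
Lemma S_smX s n : s \in S_sm -> (s ^+ n)%g \in S_sm.
Proof.
move=> Hs; elim: n => [|n IH]; first by rewrite expg0 S_sm1.
by rewrite expgS S_smM.
Qed.
Lemma S_smV s : s \in S_sm -> (s^-1)%g \in S_sm.
Proof. by move=> Hs; rewrite invg_expg S_smX. Qed.

Lemma orbitP B B' : reflect (exists h, exists s, [/\ h \in H9, s \in S_sm & B' = relabel s (rearrange h B)])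
  (B' \in Gsm_orbit B).
Proof.
rewrite inE; apply: (iffP existsP).
  move=> [h /andP [hH /existsP [s /andP [sS /eqP E]]]]; by exists h, s.
move=> [h [s [hH sS E]]]; exists h; rewrite hH; apply/existsP; exists s; by rewrite sS E eqxx.
Qed.

Lemma orbit_self B : B \in Gsm_orbit B.
Proof. apply/orbitP; exists 1%g, 1%g; by rewrite group1 S_sm1 rearr1 relab1. Qed.

Lemma orbit_rearr g B : g \in H9 -> Gsm_orbit (rearrange g B) = Gsm_orbit B.
Proof.
move=> gH; apply/setP=> B'; apply/orbitP/orbitP => [[h [s [hH sS ->]]]|[h [s [hH sS ->]]]].
  by exists (g * h)%g, s; split; rewrite ?groupM // rearrM.
exists (g^-1 * h)%g, s; split; rewrite ?groupM ?groupV //.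
by rewrite -rearrM mulgA mulgV mul1g.
Qed.

Lemma orbit_relab t B : t \in S_sm -> Gsm_orbit (relabel t B) = Gsm_orbit B.
Proof.
move=> tS; apply/setP=> B'; apply/orbitP/orbitP => [[h [s [hH sS ->]]]|[h [s [hH sS ->]]]].
  exists h, (t * s)%g; split; rewrite ?S_smM //.
  by rewrite relabM -relab_rearr.
exists h, (t^-1 * s)%g; split; rewrite ?S_smM ?S_smV //.
by rewrite relabM -relab_rearr -[relabel t^-1 _]relabM mulgV relab1.
Qed.
Lemma perm_invE (T : finType) (f fi : T -> T) (fI : injective f) :
  cancel fi f -> forall x, ((perm fI)^-1)%g x = fi x.
Proof. by move=> K x; apply: (@perm_inj _ (perm fI)); rewrite permKV permE K. Qed.

Lemma band_invE sg x : ((band_perm sg)^-1)%g x = ((((sg^-1)%g x.1.1), x.1.2), x.2).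
Proof. by apply: (@perm_invE _ _ (rows_fun (band_fun (sg^-1)%g))) => -[[a b] c]; rewrite /rows_fun /band_fun /= permKV. Qed.
Lemma pillar_invE sg x : ((pillar_perm sg)^-1)%g x = (x.1, (((sg^-1)%g x.2.1), x.2.2)).
Proof. by apply: (@perm_invE _ _ (cols_fun (band_fun (sg^-1)%g))) => -[a [b c]]; rewrite /cols_fun /band_fun /= permKV. Qed.
Lemma rowin_invE b tau x : ((rowin_perm b tau)^-1)%g x =
   ((x.1.1, if x.1.1 == b then (tau^-1)%g x.1.2 else x.1.2), x.2).
Proof.
apply: (@perm_invE _ _ (rows_fun (inband_fun b (tau^-1)%g))) => -[[a r] c]; rewrite /rows_fun /inband_fun /=.
by case: (a == b); rewrite ?permKV.
Qed.
Lemma colin_invE b tau x : ((colin_perm b tau)^-1)%g x =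
   (x.1, (x.2.1, if x.2.1 == b then (tau^-1)%g x.2.2 else x.2.2)).
Proof.
apply: (@perm_invE _ _ (cols_fun (inband_fun b (tau^-1)%g))) => -[a [p c]]; rewrite /cols_fun /inband_fun /=.
by case: (p == b); rewrite ?permKV.
Qed.
Lemma transp_invE x : (transpose_perm^-1)%g x = (x.2, x.1).
Proof. by apply: (@perm_invE _ _ transp_fun) => -[a b]. Qed.

Definition Tset (B : board) (b p r : 'I_3) : {set 'I_9} := [set B ((b, r), (p, c)) | c : 'I_3].
Definition compat (B : board) (b b' : 'I_3) : bool :=
  [forall r', [exists r, [forall p, Tset B b' p r' == Tset B b p r]]].
Definition Ks (B : board) : bool := [forall b, [forall b', compat B b b']].
Definition trB (B : board) := rearrange transpose_perm B.
Definition Inv (B : board) : nat := Ks B + Ks (trB B).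

Lemma forall_perm (T : finType) (f : {perm T}) (P : pred T) :
  [forall x, P (f x)] = [forall x, P x].
Proof.
apply/forallP/forallP => H x; last exact: H.
by rewrite -(permKV f x); apply: H.
Qed.
Lemma exists_perm (T : finType) (f : {perm T}) (P : pred T) :
  [exists x, P (f x)] = [exists x, P x].
Proof.
apply/existsP/existsP => -[x Hx]; first by exists (f x).
by exists ((f^-1)%g x); rewrite permKV.
Qed.

Lemma Ks_relab s B : Ks (relabel s B) = Ks B.
Proof.
have TE b p r : Tset (relabel s B) b p r = s @: Tset B b p r.
  by rewrite /Tset -imset_comp; apply: eq_imset => c; rewrite /= ffunE.
rewrite /Ks /compat; apply: eq_forallb => b; apply: eq_forallb => b'.
apply: eq_forallb => r'; apply: eq_existsb => r; apply: eq_forallb => p.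
by rewrite !TE (inj_eq (imset_inj (@perm_inj _ s))).
Qed.


Lemma Ks_reindex B B' (f : {perm 'I_3}) :
  (forall b b', compat B' b b' = compat B (f b) (f b')) -> Ks B' = Ks B.
Proof.
move=> H; rewrite /Ks; apply/forallP/forallP => K b.
  apply/forallP => b'; have := forallP (K ((f^-1)%g b)) ((f^-1)%g b').
  by rewrite H !permKV.
by apply/forallP => b'; rewrite H; exact: (forallP (K (f b)) (f b')).
Qed.

Lemma compat_reindex B B' b b' c c' (g h : {perm 'I_3}) (k : {perm 'I_3}) :
  (forall p r' r, (Tset B' b' p r' == Tset B' b p r) = (Tset B c' (k p) (g r') == Tset B c (k p) (h r))) ->
  compat B' b b' = compat B c c'.
Proof.
move=> H; rewrite /compat; apply/forallP/forallP => K r'.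
  have /existsP [r0 /forallP Hr0] := K ((g^-1)%g r').
  apply/existsP; exists (h r0); apply/forallP => p.
  by have := Hr0 ((k^-1)%g p); rewrite H !permKV.
have /existsP [r0 /forallP Hr0] := K (g r').
apply/existsP; exists ((h^-1)%g r0); apply/forallP => p.
by rewrite H permKV; apply: Hr0.
Qed.

Lemma Ks_band sg B : Ks (rearrange (band_perm sg) B) = Ks B.
Proof.
have TE b p r : Tset (rearrange (band_perm sg) B) b p r = Tset B ((sg^-1)%g b) p r.
  by apply: eq_imset => c; rewrite ffunE band_invE.
apply: (Ks_reindex (f := (sg^-1)%g)) => b b'.
by apply: (compat_reindex (B := B) (b := b) (b' := b') (g := 1%g) (h := 1%g) (k := 1%g)) => p r' r; rewrite !TE !perm1.
Qed.

Lemma Ks_pillar sg B : Ks (rearrange (pillar_perm sg) B) = Ks B.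
Proof.
have TE b p r : Tset (rearrange (pillar_perm sg) B) b p r = Tset B b ((sg^-1)%g p) r.
  by apply: eq_imset => c; rewrite ffunE pillar_invE.
apply: (Ks_reindex (f := 1%g)) => b b'; rewrite !perm1.
by apply: (compat_reindex (B := B) (b := b) (b' := b') (g := 1%g) (h := 1%g) (k := (sg^-1)%g)) => p r' r; rewrite !TE !perm1.
Qed.

Lemma Ks_rowin b0 tau B : Ks (rearrange (rowin_perm b0 tau) B) = Ks B.
Proof.
pose fb (b : 'I_3) : {perm 'I_3} := if b == b0 then (tau^-1)%g else 1%g.
have TE b p r : Tset (rearrange (rowin_perm b0 tau) B) b p r = Tset B b p (fb b r).
  apply: eq_imset => c; rewrite ffunE rowin_invE /= /fb.
  by case: (b == b0); rewrite ?perm1.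
apply: (Ks_reindex (f := 1%g)) => b b'; rewrite !perm1.
by apply: (compat_reindex (B := B) (b := b) (b' := b') (g := fb b') (h := fb b) (k := 1%g)) => p r' r; rewrite !TE !perm1.
Qed.

Lemma Ks_colin p0 tau B : Ks (rearrange (colin_perm p0 tau) B) = Ks B.
Proof.
have TE b p r : Tset (rearrange (colin_perm p0 tau) B) b p r = Tset B b p r.
  apply/setP=> y; apply/imsetP/imsetP => -[c _ ->].
    rewrite ffunE colin_invE /=.
    by case: (p == p0); [exists ((tau^-1)%g c) | exists c].
  case E: (p == p0).
    exists (tau c) => //; by rewrite ffunE colin_invE /= E permK.
  by exists c => //; rewrite ffunE colin_invE /= E.
apply: (Ks_reindex (f := 1%g)) => b b'; rewrite !perm1.
by apply: (compat_reindex (B := B) (b := b) (b' := b') (g := 1%g) (h := 1%g) (k := 1%g)) => p r' r; rewrite !TE !perm1.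
Qed.

Lemma trB_ext B : trB (trB B) = B.
Proof. by apply/ffunP => x; rewrite !ffunE !transp_invE; case: x. Qed.

Lemma trB_band sg B : trB (rearrange (band_perm sg) B) = rearrange (pillar_perm sg) (trB B).
Proof. by apply/ffunP => x; rewrite !ffunE transp_invE band_invE pillar_invE transp_invE. Qed.
Lemma trB_pillar sg B : trB (rearrange (pillar_perm sg) B) = rearrange (band_perm sg) (trB B).
Proof. by apply/ffunP => x; rewrite !ffunE transp_invE band_invE pillar_invE transp_invE. Qed.
Lemma trB_rowin b tau B : trB (rearrange (rowin_perm b tau) B) = rearrange (colin_perm b tau) (trB B).
Proof. by apply/ffunP => x; rewrite !ffunE transp_invE rowin_invE colin_invE transp_invE. Qed.
Lemma trB_colin b tau B : trB (rearrange (colin_perm b tau) B) = rearrange (rowin_perm b tau) (trB B).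
Proof. by apply/ffunP => x; rewrite !ffunE transp_invE rowin_invE colin_invE transp_invE. Qed.

Definition Hinv : {set {perm cell}} := [set g | [forall B : board, Inv (rearrange g B) == Inv B]].

Lemma Hinv_group : group_set Hinv.
Proof.
apply/group_setP; split.
  by rewrite inE; apply/forallP => B; rewrite rearr1.
move=> g h; rewrite !inE => /forallP Hg /forallP Hh; apply/forallP => B.
by rewrite rearrM (eqP (Hh _)) (eqP (Hg _)).
Qed.
Canonical Hinv_grp := Group Hinv_group.

Lemma H9_Hinv : H9 \subset Hinv.
Proof.
rewrite gen_subG; apply/subsetP => g.
rewrite !inE => /orP [/orP [/orP [/orP [/imsetP [sg _ ->]|/imsetP [[b tau] _ ->]]|/imsetP [sg _ ->]]|/imsetP [[b tau] _ ->]]|/eqP ->];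
  apply/forallP => B; apply/eqP; rewrite /Inv.
- by rewrite Ks_band trB_band Ks_pillar.
- by rewrite Ks_rowin trB_rowin Ks_colin.
- by rewrite Ks_pillar trB_pillar Ks_band.
- by rewrite Ks_colin trB_colin Ks_rowin.
- by rewrite trB_ext addnC.
Qed.

Lemma Inv_relab s B : Inv (relabel s B) = Inv B.
Proof.
rewrite /Inv.
have -> : trB (relabel s B) = relabel s (trB B) by apply/ffunP => x; rewrite !ffunE.
by rewrite !Ks_relab.
Qed.

Lemma Inv_orbit B B' : B' \in Gsm_orbit B -> Inv B' = Inv B.
Proof.
rewrite inE => /existsP [h /andP [hH /existsP [s /andP [_ /eqP ->]]]].
rewrite Inv_relab.
have := subsetP H9_Hinv h hH; rewrite inE => /forallP H; exact/eqP/H.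
Qed.

Definition o0 : 'I_3 := @Ordinal 3 0 isT.
Definition o1 : 'I_3 := @Ordinal 3 1 isT.
Definition o2 : 'I_3 := @Ordinal 3 2 isT.
Definition I3s : seq 'I_3 := [:: o0; o1; o2].
Definition ord3 (n : nat) : 'I_3 := nth o0 I3s n.

Lemma I3_cases (P : 'I_3 -> Prop) : P o0 -> P o1 -> P o2 -> forall i, P i.
Proof.
move=> H0 H1 H2 [[|[|[|n]]] Hi] //.
- by have -> : Ordinal Hi = o0 by apply: val_inj.
- by have -> : Ordinal Hi = o1 by apply: val_inj.
- by have -> : Ordinal Hi = o2 by apply: val_inj.
Qed.
Lemma mem_I3s i : i \in I3s.
Proof. by elim/I3_cases: i. Qed.
Lemma ord3K (i : 'I_3) : ord3 i = i.
Proof. by elim/I3_cases: i. Qed.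
Lemma ord3_val n : n < 3 -> val (ord3 n) = n.
Proof. by case: n => [|[|[|n]]]. Qed.

Definition P3tab : seq (seq nat) :=
  [:: [:: 0; 1; 2]; [:: 1; 2; 0]; [:: 2; 0; 1]; [:: 0; 2; 1]; [:: 2; 1; 0]; [:: 1; 0; 2]].
Definition pfn (k i : nat) : nat := nth 0 (nth [::] P3tab (k %% 6)) i.
Definition inv6 (k : nat) : nat := nth 0 [:: 0; 2; 1; 3; 4; 5] (k %% 6).
Definition p3f (k : nat) (i : 'I_3) : 'I_3 := ord3 (pfn k i).

Definition psin0 (i j : nat) : nat := 3 * ((2 * j + i) %% 3) + (2 * i + 2 * j) %% 3.
Definition psin (e : bool) (i j : nat) : nat := if e then psin0 j i else psin0 i j.
Definition d1 (y : nat) : nat := (y %% 3 + 2 * (y %/ 3)) %% 3.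
Definition d2 (y : nat) : nat := (y %% 3 + y %/ 3) %% 3.
Definition Ln (bit : bool) (p r : nat) : nat := if bit then (r + 2 * p) %% 3 else (r + p) %% 3.

Definition iota3 := [:: 0; 1; 2].
Definition SQP : seq (bool * nat * nat) :=
  flatten [seq [seq (e, k1, k2) | k1 <- iota 0 6, k2 <- iota 0 6] | e <- [:: false; true]].
Definition sqf (par : bool * nat * nat) : seq nat :=
  let: (e, k1, k2) := par in [seq psin e (pfn k1 i) (pfn k2 j) | i <- iota3, j <- iota3].
Definition SQ : seq (seq nat) := map sqf SQP.

Definition r3ok (a b c : nat) := [&& a != b, a != c, b != c & a + b + c == 12].
Definition L9 := iota 0 9.
Definition chk9 : bool :=
  all (fun x0 => all (fun x1 => all (fun x2 =>
   if r3ok x0 x1 x2 then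
   all (fun x3 => all (fun x4 => all (fun x5 =>
   if r3ok x3 x4 x5 && uniq [:: x0; x1; x2; x3; x4; x5] then
   all (fun x6 => all (fun x7 => all (fun x8 =>
   if [&& uniq [:: x0; x1; x2; x3; x4; x5; x6; x7; x8], r3ok x6 x7 x8,
         x0 + x3 + x6 == 12, x1 + x4 + x7 == 12 & x2 + x5 + x8 == 12]
   then [:: x0; x1; x2; x3; x4; x5; x6; x7; x8] \in SQ else true) L9) L9) L9
   else true) L9) L9) L9
   else true) L9) L9) L9.

Lemma chk9_ok : chk9. Proof. Time vm_compute. reflexivity. Qed.

Definition rowpair : bool :=
  all (fun par => all (fun par' =>
    let: (e, k1, k2) := par in let: (e', k1', k2') := par' in
    (all (fun r => all (fun c => all (fun c' =>
        psin e (pfn k1 r) (pfn k2 c) != psin e' (pfn k1' r) (pfn k2' c')) iota3) iota3) iota3)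
    ==> ((e == e') && all (fun r => pfn k1 r != pfn k1' r) iota3)) SQP) SQP.
Definition colpair : bool :=
  all (fun par => all (fun par' =>
    let: (e, k1, k2) := par in let: (e', k1', k2') := par' in
    (all (fun c => all (fun r => all (fun r' =>
        psin e (pfn k1 r) (pfn k2 c) != psin e' (pfn k1' r') (pfn k2' c)) iota3) iota3) iota3)
    ==> ((e == e') && all (fun c => pfn k2 c != pfn k2' c) iota3)) SQP) SQP.
Lemma rowpair_ok : rowpair. Proof. by vm_compute. Qed.
Lemma colpair_ok : colpair. Proof. by vm_compute. Qed.

Definition latin_ok : bool :=
  all (fun k0 => all (fun k1 => all (fun k2 =>
    (all (fun r => [&& pfn k0 r != pfn k1 r, pfn k0 r != pfn k2 r & pfn k1 r != pfn k2 r]) iota3)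
    ==> all (fun p => all (fun r =>
          pfn (nth k0 [:: k0; k1; k2] p) (pfn (inv6 k0) r) == Ln (pfn k1 (pfn (inv6 k0) 0) == 2) p r)
          iota3) iota3) (iota 0 6)) (iota 0 6)) (iota 0 6).
Lemma latin_ok_ok : latin_ok. Proof. by vm_compute. Qed.

Definition SQsums : bool :=
  all (fun q => [&& nth 0 q 0 + nth 0 q 1 + nth 0 q 2 == 12,
                    nth 0 q 3 + nth 0 q 4 + nth 0 q 5 == 12,
                    nth 0 q 6 + nth 0 q 7 + nth 0 q 8 == 12,
                    nth 0 q 0 + nth 0 q 3 + nth 0 q 6 == 12,
                    nth 0 q 1 + nth 0 q 4 + nth 0 q 7 == 12 &
                    nth 0 q 2 + nth 0 q 5 + nth 0 q 8 == 12]) SQ.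
Lemma SQsums_ok : SQsums. Proof. by vm_compute. Qed.
Lemma SQP_bounds : all (fun par => (par.1.2 < 6) && (par.2 < 6)) SQP. Proof. by vm_compute. Qed.

Inductive hgen := HBand of nat | HRow of nat & nat | HPil of nat | HCol of nat & nat | HTr.
Inductive sgen := SA of nat | SB of nat | SW.
Inductive op := OH of hgen | OS of sgen.

Definition sfn (s : sgen) (y : nat) : nat :=
  match s with
  | SA k => psin0 (pfn k (d1 y)) (d2 y)
  | SB k => psin0 (d1 y) (pfn k (d2 y))
  | SW => psin0 (d2 y) (d1 y)
  end.

Definition rawb := cell -> nat.
Definition hinvf (g : hgen) (x : cell) : cell :=
  match g with
  | HBand k => ((p3f (inv6 k) x.1.1, x.1.2), x.2)
  | HRow b k => ((x.1.1, if val x.1.1 == val (ord3 b) then p3f (inv6 k) x.1.2 else x.1.2), x.2)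
  | HPil k => (x.1, (p3f (inv6 k) x.2.1, x.2.2))
  | HCol p k => (x.1, (x.2.1, if val x.2.1 == val (ord3 p) then p3f (inv6 k) x.2.2 else x.2.2))
  | HTr => (x.2, x.1)
  end.
Definition rapply_op (o : op) (R : rawb) : rawb :=
  match o with
  | OH g => fun x => R (hinvf g x)
  | OS s => fun x => sfn s (R x)
  end.
Definition rapply (ops : seq op) (R : rawb) : rawb := foldl (fun R o => rapply_op o R) R ops.

Definition cellsL : seq cell :=
  flatten [seq [seq ((b, r), (p, c)) | p <- I3s, c <- I3s] | b <- I3s, r <- I3s].
Definition sel (s0 s1 s2 : bool) (b : 'I_3) : bool := nth false [:: s0; s1; s2] b.
Definition CBraw (k : bool * bool * bool * bool * bool * bool * bool) : rawb :=
  let: (e, s0, s1, s2, t0, t1, t2) := k in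
  fun x => psin e (Ln (sel s0 s1 s2 x.1.1) x.2.1 x.1.2) (Ln (sel t0 t1 t2 x.2.1) x.1.1 x.2.2).
Definition keyn (k : bool * bool * bool * bool * bool * bool * bool) : nat :=
  let: (e, s0, s1, s2, t0, t1, t2) := k in
  64 * e + 32 * s0 + 16 * s1 + 8 * s2 + 4 * t0 + 2 * t1 + t2.
Definition Wtab : seq (nat * seq op) := [::
  (0, [:: ]);
  (1, [:: ]);
  (1, [:: OH (HPil 2); OH (HRow 0 1); OH (HRow 1 1); OH (HRow 2 1); OH (HCol 0 0); OH (HCol 1 0); OH (HCol 2 0)]);
  (1, [:: OH (HBand 3); OH (HRow 0 0); OH (HRow 1 0); OH (HRow 2 0); OH (HCol 0 0); OH (HCol 1 0); OH (HCol 2 0); OH (HPil 1); OH (HRow 0 2); OH (HRow 1 2); OH (HRow 2 2); OH (HCol 0 0); OH (HCol 1 0); OH (HCol 2 0)]);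
  (1, [:: OH (HPil 1); OH (HRow 0 2); OH (HRow 1 2); OH (HRow 2 2); OH (HCol 0 0); OH (HCol 1 0); OH (HCol 2 0)]);
  (1, [:: OH (HBand 3); OH (HRow 0 0); OH (HRow 1 0); OH (HRow 2 0); OH (HCol 0 0); OH (HCol 1 0); OH (HCol 2 0); OH (HPil 2); OH (HRow 0 1); OH (HRow 1 1); OH (HRow 2 1); OH (HCol 0 0); OH (HCol 1 0); OH (HCol 2 0)]);
  (1, [:: OH (HBand 3); OH (HRow 0 0); OH (HRow 1 0); OH (HRow 2 0); OH (HCol 0 0); OH (HCol 1 0); OH (HCol 2 0)]);
  (0, [:: OH (HBand 3); OH (HRow 0 0); OH (HRow 1 0); OH (HRow 2 0); OH (HCol 0 0); OH (HCol 1 0); OH (HCol 2 0)]);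
  (1, [:: OH HTr; OH (HRow 0 0); OH (HRow 1 0); OH (HRow 2 0); OH (HCol 0 0); OH (HCol 1 0); OH (HCol 2 0); OS SW; OH (HRow 0 0); OH (HRow 1 0); OH (HRow 2 0); OH (HCol 0 0); OH (HCol 1 0); OH (HCol 2 0)]);
  (2, [:: ]);
  (2, [:: OH (HPil 2); OH (HRow 0 1); OH (HRow 1 1); OH (HRow 2 2); OH (HCol 0 0); OH (HCol 1 0); OH (HCol 2 0)]);
  (2, [:: OH (HBand 5); OH (HRow 0 0); OH (HRow 1 0); OH (HRow 2 0); OH (HCol 0 1); OH (HCol 1 1); OH (HCol 2 2); OH (HPil 1); OH (HRow 0 2); OH (HRow 1 2); OH (HRow 2 1); OH (HCol 0 0); OH (HCol 1 0); OH (HCol 2 0)]);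
  (2, [:: OH (HPil 1); OH (HRow 0 2); OH (HRow 1 2); OH (HRow 2 1); OH (HCol 0 0); OH (HCol 1 0); OH (HCol 2 0)]);
  (2, [:: OH (HBand 5); OH (HRow 0 0); OH (HRow 1 0); OH (HRow 2 0); OH (HCol 0 1); OH (HCol 1 1); OH (HCol 2 2); OH (HPil 2); OH (HRow 0 1); OH (HRow 1 1); OH (HRow 2 2); OH (HCol 0 0); OH (HCol 1 0); OH (HCol 2 0)]);
  (2, [:: OH (HBand 5); OH (HRow 0 0); OH (HRow 1 0); OH (HRow 2 0); OH (HCol 0 1); OH (HCol 1 1); OH (HCol 2 2)]);
  (1, [:: OH (HPil 5); OH (HRow 0 1); OH (HRow 1 1); OH (HRow 2 1); OH (HCol 0 0); OH (HCol 1 0); OH (HCol 2 0); OH HTr; OH (HRow 0 0); OH (HRow 1 0); OH (HRow 2 0); OH (HCol 0 0); OH (HCol 1 0); OH (HCol 2 0); OS SW; OH (HRow 0 0); OH (HRow 1 0); OH (HRow 2 0); OH (HCol 0 0); OH (HCol 1 0); OH (HCol 2 0)]);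
  (1, [:: OH (HPil 2); OH (HRow 0 1); OH (HRow 1 1); OH (HRow 2 1); OH (HCol 0 0); OH (HCol 1 0); OH (HCol 2 0); OH HTr; OH (HRow 0 0); OH (HRow 1 0); OH (HRow 2 0); OH (HCol 0 0); OH (HCol 1 0); OH (HCol 2 0); OS SW; OH (HRow 0 0); OH (HRow 1 0); OH (HRow 2 0); OH (HCol 0 0); OH (HCol 1 0); OH (HCol 2 0)]);
  (2, [:: OH (HBand 2); OH (HRow 0 0); OH (HRow 1 0); OH (HRow 2 0); OH (HCol 0 1); OH (HCol 1 1); OH (HCol 2 2)]);
  (2, [:: OH (HBand 2); OH (HRow 0 0); OH (HRow 1 0); OH (HRow 2 0); OH (HCol 0 1); OH (HCol 1 1); OH (HCol 2 2); OH (HPil 2); OH (HRow 0 1); OH (HRow 1 2); OH (HRow 2 1); OH (HCol 0 0); OH (HCol 1 0); OH (HCol 2 0)]);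
  (2, [:: OH (HBand 3); OH (HRow 0 0); OH (HRow 1 0); OH (HRow 2 0); OH (HCol 0 0); OH (HCol 1 0); OH (HCol 2 0); OH (HPil 1); OH (HRow 0 2); OH (HRow 1 1); OH (HRow 2 2); OH (HCol 0 0); OH (HCol 1 0); OH (HCol 2 0)]);
  (2, [:: OH (HBand 2); OH (HRow 0 0); OH (HRow 1 0); OH (HRow 2 0); OH (HCol 0 1); OH (HCol 1 1); OH (HCol 2 2); OH (HPil 1); OH (HRow 0 2); OH (HRow 1 1); OH (HRow 2 2); OH (HCol 0 0); OH (HCol 1 0); OH (HCol 2 0)]);
  (2, [:: OH (HBand 3); OH (HRow 0 0); OH (HRow 1 0); OH (HRow 2 0); OH (HCol 0 0); OH (HCol 1 0); OH (HCol 2 0); OH (HPil 2); OH (HRow 0 1); OH (HRow 1 2); OH (HRow 2 1); OH (HCol 0 0); OH (HCol 1 0); OH (HCol 2 0)]);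
  (2, [:: OH (HBand 3); OH (HRow 0 0); OH (HRow 1 0); OH (HRow 2 0); OH (HCol 0 0); OH (HCol 1 0); OH (HCol 2 0)]);
  (1, [:: OH (HPil 3); OH (HRow 0 0); OH (HRow 1 0); OH (HRow 2 0); OH (HCol 0 0); OH (HCol 1 0); OH (HCol 2 0); OH HTr; OH (HRow 0 0); OH (HRow 1 0); OH (HRow 2 0); OH (HCol 0 0); OH (HCol 1 0); OH (HCol 2 0); OS SW; OH (HRow 0 0); OH (HRow 1 0); OH (HRow 2 0); OH (HCol 0 0); OH (HCol 1 0); OH (HCol 2 0)]);
  (1, [:: OH (HBand 3); OH (HRow 0 0); OH (HRow 1 0); OH (HRow 2 0); OH (HCol 0 0); OH (HCol 1 0); OH (HCol 2 0); OH (HPil 1); OH (HRow 0 2); OH (HRow 1 2); OH (HRow 2 2); OH (HCol 0 0); OH (HCol 1 0); OH (HCol 2 0); OH HTr; OH (HRow 0 0); OH (HRow 1 0); OH (HRow 2 0); OH (HCol 0 0); OH (HCol 1 0); OH (HCol 2 0); OS SW; OH (HRow 0 0); OH (HRow 1 0); OH (HRow 2 0); OH (HCol 0 0); OH (HCol 1 0); OH (HCol 2 0)]);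
  (2, [:: OH (HBand 1); OH (HRow 0 0); OH (HRow 1 0); OH (HRow 2 0); OH (HCol 0 2); OH (HCol 1 2); OH (HCol 2 1); OH (HPil 5); OH (HRow 0 2); OH (HRow 1 1); OH (HRow 2 1); OH (HCol 0 0); OH (HCol 1 0); OH (HCol 2 0)]);
  (2, [:: OH (HBand 1); OH (HRow 0 0); OH (HRow 1 0); OH (HRow 2 0); OH (HCol 0 2); OH (HCol 1 2); OH (HCol 2 1); OH (HPil 3); OH (HRow 0 0); OH (HRow 1 0); OH (HRow 2 0); OH (HCol 0 0); OH (HCol 1 0); OH (HCol 2 0)]);
  (2, [:: OH (HBand 4); OH (HRow 0 0); OH (HRow 1 0); OH (HRow 2 0); OH (HCol 0 2); OH (HCol 1 2); OH (HCol 2 1); OH (HPil 4); OH (HRow 0 1); OH (HRow 1 2); OH (HRow 2 2); OH (HCol 0 0); OH (HCol 1 0); OH (HCol 2 0)]);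
  (2, [:: OH (HBand 1); OH (HRow 0 0); OH (HRow 1 0); OH (HRow 2 0); OH (HCol 0 2); OH (HCol 1 2); OH (HCol 2 1); OH (HPil 4); OH (HRow 0 1); OH (HRow 1 2); OH (HRow 2 2); OH (HCol 0 0); OH (HCol 1 0); OH (HCol 2 0)]);
  (2, [:: OH (HBand 4); OH (HRow 0 0); OH (HRow 1 0); OH (HRow 2 0); OH (HCol 0 2); OH (HCol 1 2); OH (HCol 2 1); OH (HPil 3); OH (HRow 0 0); OH (HRow 1 0); OH (HRow 2 0); OH (HCol 0 0); OH (HCol 1 0); OH (HCol 2 0)]);
  (2, [:: OH (HBand 4); OH (HRow 0 0); OH (HRow 1 0); OH (HRow 2 0); OH (HCol 0 2); OH (HCol 1 2); OH (HCol 2 1); OH (HPil 5); OH (HRow 0 2); OH (HRow 1 1); OH (HRow 2 1); OH (HCol 0 0); OH (HCol 1 0); OH (HCol 2 0)]);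
  (1, [:: OH (HBand 3); OH (HRow 0 0); OH (HRow 1 0); OH (HRow 2 0); OH (HCol 0 0); OH (HCol 1 0); OH (HCol 2 0); OH (HPil 4); OH (HRow 0 2); OH (HRow 1 2); OH (HRow 2 2); OH (HCol 0 0); OH (HCol 1 0); OH (HCol 2 0); OH HTr; OH (HRow 0 0); OH (HRow 1 0); OH (HRow 2 0); OH (HCol 0 0); OH (HCol 1 0); OH (HCol 2 0); OS SW; OH (HRow 0 0); OH (HRow 1 0); OH (HRow 2 0); OH (HCol 0 0); OH (HCol 1 0); OH (HCol 2 0)]);
  (1, [:: OH (HPil 1); OH (HRow 0 2); OH (HRow 1 2); OH (HRow 2 2); OH (HCol 0 0); OH (HCol 1 0); OH (HCol 2 0); OH HTr; OH (HRow 0 0); OH (HRow 1 0); OH (HRow 2 0); OH (HCol 0 0); OH (HCol 1 0); OH (HCol 2 0); OS SW; OH (HRow 0 0); OH (HRow 1 0); OH (HRow 2 0); OH (HCol 0 0); OH (HCol 1 0); OH (HCol 2 0)]);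
  (2, [:: OH (HBand 1); OH (HRow 0 0); OH (HRow 1 0); OH (HRow 2 0); OH (HCol 0 2); OH (HCol 1 2); OH (HCol 2 1)]);
  (2, [:: OH (HBand 1); OH (HRow 0 0); OH (HRow 1 0); OH (HRow 2 0); OH (HCol 0 2); OH (HCol 1 2); OH (HCol 2 1); OH (HPil 2); OH (HRow 0 2); OH (HRow 1 1); OH (HRow 2 1); OH (HCol 0 0); OH (HCol 1 0); OH (HCol 2 0)]);
  (2, [:: OH (HBand 4); OH (HRow 0 0); OH (HRow 1 0); OH (HRow 2 0); OH (HCol 0 2); OH (HCol 1 2); OH (HCol 2 1); OH (HPil 1); OH (HRow 0 1); OH (HRow 1 2); OH (HRow 2 2); OH (HCol 0 0); OH (HCol 1 0); OH (HCol 2 0)]);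
  (2, [:: OH (HBand 1); OH (HRow 0 0); OH (HRow 1 0); OH (HRow 2 0); OH (HCol 0 2); OH (HCol 1 2); OH (HCol 2 1); OH (HPil 1); OH (HRow 0 1); OH (HRow 1 2); OH (HRow 2 2); OH (HCol 0 0); OH (HCol 1 0); OH (HCol 2 0)]);
  (2, [:: OH (HBand 4); OH (HRow 0 0); OH (HRow 1 0); OH (HRow 2 0); OH (HCol 0 2); OH (HCol 1 2); OH (HCol 2 1); OH (HPil 2); OH (HRow 0 2); OH (HRow 1 1); OH (HRow 2 1); OH (HCol 0 0); OH (HCol 1 0); OH (HCol 2 0)]);
  (2, [:: OH (HBand 4); OH (HRow 0 0); OH (HRow 1 0); OH (HRow 2 0); OH (HCol 0 2); OH (HCol 1 2); OH (HCol 2 1)]);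
  (1, [:: OH (HPil 4); OH (HRow 0 2); OH (HRow 1 2); OH (HRow 2 2); OH (HCol 0 0); OH (HCol 1 0); OH (HCol 2 0); OH HTr; OH (HRow 0 0); OH (HRow 1 0); OH (HRow 2 0); OH (HCol 0 0); OH (HCol 1 0); OH (HCol 2 0); OS SW; OH (HRow 0 0); OH (HRow 1 0); OH (HRow 2 0); OH (HCol 0 0); OH (HCol 1 0); OH (HCol 2 0)]);
  (1, [:: OH (HBand 3); OH (HRow 0 0); OH (HRow 1 0); OH (HRow 2 0); OH (HCol 0 0); OH (HCol 1 0); OH (HCol 2 0); OH (HPil 2); OH (HRow 0 1); OH (HRow 1 1); OH (HRow 2 1); OH (HCol 0 0); OH (HCol 1 0); OH (HCol 2 0); OH HTr; OH (HRow 0 0); OH (HRow 1 0); OH (HRow 2 0); OH (HCol 0 0); OH (HCol 1 0); OH (HCol 2 0); OS SW; OH (HRow 0 0); OH (HRow 1 0); OH (HRow 2 0); OH (HCol 0 0); OH (HCol 1 0); OH (HCol 2 0)]);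
  (2, [:: OH (HBand 2); OH (HRow 0 0); OH (HRow 1 0); OH (HRow 2 0); OH (HCol 0 1); OH (HCol 1 1); OH (HCol 2 2); OH (HPil 5); OH (HRow 0 1); OH (HRow 1 2); OH (HRow 2 1); OH (HCol 0 0); OH (HCol 1 0); OH (HCol 2 0)]);
  (2, [:: OH (HBand 2); OH (HRow 0 0); OH (HRow 1 0); OH (HRow 2 0); OH (HCol 0 1); OH (HCol 1 1); OH (HCol 2 2); OH (HPil 3); OH (HRow 0 0); OH (HRow 1 0); OH (HRow 2 0); OH (HCol 0 0); OH (HCol 1 0); OH (HCol 2 0)]);
  (2, [:: OH (HBand 3); OH (HRow 0 0); OH (HRow 1 0); OH (HRow 2 0); OH (HCol 0 0); OH (HCol 1 0); OH (HCol 2 0); OH (HPil 4); OH (HRow 0 2); OH (HRow 1 1); OH (HRow 2 2); OH (HCol 0 0); OH (HCol 1 0); OH (HCol 2 0)]);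
  (2, [:: OH (HBand 2); OH (HRow 0 0); OH (HRow 1 0); OH (HRow 2 0); OH (HCol 0 1); OH (HCol 1 1); OH (HCol 2 2); OH (HPil 4); OH (HRow 0 2); OH (HRow 1 1); OH (HRow 2 2); OH (HCol 0 0); OH (HCol 1 0); OH (HCol 2 0)]);
  (2, [:: OH (HBand 3); OH (HRow 0 0); OH (HRow 1 0); OH (HRow 2 0); OH (HCol 0 0); OH (HCol 1 0); OH (HCol 2 0); OH (HPil 3); OH (HRow 0 0); OH (HRow 1 0); OH (HRow 2 0); OH (HCol 0 0); OH (HCol 1 0); OH (HCol 2 0)]);
  (2, [:: OH (HBand 3); OH (HRow 0 0); OH (HRow 1 0); OH (HRow 2 0); OH (HCol 0 0); OH (HCol 1 0); OH (HCol 2 0); OH (HPil 5); OH (HRow 0 1); OH (HRow 1 2); OH (HRow 2 1); OH (HCol 0 0); OH (HCol 1 0); OH (HCol 2 0)]);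
  (1, [:: OH (HBand 3); OH (HRow 0 0); OH (HRow 1 0); OH (HRow 2 0); OH (HCol 0 0); OH (HCol 1 0); OH (HCol 2 0); OH (HPil 3); OH (HRow 0 0); OH (HRow 1 0); OH (HRow 2 0); OH (HCol 0 0); OH (HCol 1 0); OH (HCol 2 0); OH HTr; OH (HRow 0 0); OH (HRow 1 0); OH (HRow 2 0); OH (HCol 0 0); OH (HCol 1 0); OH (HCol 2 0); OS SW; OH (HRow 0 0); OH (HRow 1 0); OH (HRow 2 0); OH (HCol 0 0); OH (HCol 1 0); OH (HCol 2 0)]);
  (1, [:: OH (HBand 3); OH (HRow 0 0); OH (HRow 1 0); OH (HRow 2 0); OH (HCol 0 0); OH (HCol 1 0); OH (HCol 2 0); OH HTr; OH (HRow 0 0); OH (HRow 1 0); OH (HRow 2 0); OH (HCol 0 0); OH (HCol 1 0); OH (HCol 2 0); OS SW; OH (HRow 0 0); OH (HRow 1 0); OH (HRow 2 0); OH (HCol 0 0); OH (HCol 1 0); OH (HCol 2 0)]);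
  (2, [:: OH (HPil 5); OH (HRow 0 1); OH (HRow 1 1); OH (HRow 2 2); OH (HCol 0 0); OH (HCol 1 0); OH (HCol 2 0)]);
  (2, [:: OH (HPil 3); OH (HRow 0 0); OH (HRow 1 0); OH (HRow 2 0); OH (HCol 0 0); OH (HCol 1 0); OH (HCol 2 0)]);
  (2, [:: OH (HBand 5); OH (HRow 0 0); OH (HRow 1 0); OH (HRow 2 0); OH (HCol 0 1); OH (HCol 1 1); OH (HCol 2 2); OH (HPil 4); OH (HRow 0 2); OH (HRow 1 2); OH (HRow 2 1); OH (HCol 0 0); OH (HCol 1 0); OH (HCol 2 0)]);
  (2, [:: OH (HPil 4); OH (HRow 0 2); OH (HRow 1 2); OH (HRow 2 1); OH (HCol 0 0); OH (HCol 1 0); OH (HCol 2 0)]);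
  (2, [:: OH (HBand 5); OH (HRow 0 0); OH (HRow 1 0); OH (HRow 2 0); OH (HCol 0 1); OH (HCol 1 1); OH (HCol 2 2); OH (HPil 3); OH (HRow 0 0); OH (HRow 1 0); OH (HRow 2 0); OH (HCol 0 0); OH (HCol 1 0); OH (HCol 2 0)]);
  (2, [:: OH (HBand 5); OH (HRow 0 0); OH (HRow 1 0); OH (HRow 2 0); OH (HCol 0 1); OH (HCol 1 1); OH (HCol 2 2); OH (HPil 5); OH (HRow 0 1); OH (HRow 1 1); OH (HRow 2 2); OH (HCol 0 0); OH (HCol 1 0); OH (HCol 2 0)]);
  (1, [:: OH (HBand 3); OH (HRow 0 0); OH (HRow 1 0); OH (HRow 2 0); OH (HCol 0 0); OH (HCol 1 0); OH (HCol 2 0); OH (HPil 5); OH (HRow 0 1); OH (HRow 1 1); OH (HRow 2 1); OH (HCol 0 0); OH (HCol 1 0); OH (HCol 2 0); OH HTr; OH (HRow 0 0); OH (HRow 1 0); OH (HRow 2 0); OH (HCol 0 0); OH (HCol 1 0); OH (HCol 2 0); OS SW; OH (HRow 0 0); OH (HRow 1 0); OH (HRow 2 0); OH (HCol 0 0); OH (HCol 1 0); OH (HCol 2 0)]);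
  (0, [:: OH (HPil 3); OH (HRow 0 0); OH (HRow 1 0); OH (HRow 2 0); OH (HCol 0 0); OH (HCol 1 0); OH (HCol 2 0)]);
  (1, [:: OH (HPil 5); OH (HRow 0 1); OH (HRow 1 1); OH (HRow 2 1); OH (HCol 0 0); OH (HCol 1 0); OH (HCol 2 0)]);
  (1, [:: OH (HPil 3); OH (HRow 0 0); OH (HRow 1 0); OH (HRow 2 0); OH (HCol 0 0); OH (HCol 1 0); OH (HCol 2 0)]);
  (1, [:: OH (HBand 3); OH (HRow 0 0); OH (HRow 1 0); OH (HRow 2 0); OH (HCol 0 0); OH (HCol 1 0); OH (HCol 2 0); OH (HPil 4); OH (HRow 0 2); OH (HRow 1 2); OH (HRow 2 2); OH (HCol 0 0); OH (HCol 1 0); OH (HCol 2 0)]);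
  (1, [:: OH (HPil 4); OH (HRow 0 2); OH (HRow 1 2); OH (HRow 2 2); OH (HCol 0 0); OH (HCol 1 0); OH (HCol 2 0)]);
  (1, [:: OH (HBand 3); OH (HRow 0 0); OH (HRow 1 0); OH (HRow 2 0); OH (HCol 0 0); OH (HCol 1 0); OH (HCol 2 0); OH (HPil 3); OH (HRow 0 0); OH (HRow 1 0); OH (HRow 2 0); OH (HCol 0 0); OH (HCol 1 0); OH (HCol 2 0)]);
  (1, [:: OH (HBand 3); OH (HRow 0 0); OH (HRow 1 0); OH (HRow 2 0); OH (HCol 0 0); OH (HCol 1 0); OH (HCol 2 0); OH (HPil 5); OH (HRow 0 1); OH (HRow 1 1); OH (HRow 2 1); OH (HCol 0 0); OH (HCol 1 0); OH (HCol 2 0)]);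
  (0, [:: OH (HBand 3); OH (HRow 0 0); OH (HRow 1 0); OH (HRow 2 0); OH (HCol 0 0); OH (HCol 1 0); OH (HCol 2 0); OH (HPil 3); OH (HRow 0 0); OH (HRow 1 0); OH (HRow 2 0); OH (HCol 0 0); OH (HCol 1 0); OH (HCol 2 0)]);
  (0, [:: OH HTr; OH (HRow 0 0); OH (HRow 1 0); OH (HRow 2 0); OH (HCol 0 0); OH (HCol 1 0); OH (HCol 2 0)]);
  (1, [:: OS SW; OH (HRow 0 0); OH (HRow 1 0); OH (HRow 2 0); OH (HCol 0 0); OH (HCol 1 0); OH (HCol 2 0)]);
  (1, [:: OH (HPil 2); OH (HRow 0 1); OH (HRow 1 1); OH (HRow 2 1); OH (HCol 0 0); OH (HCol 1 0); OH (HCol 2 0); OS SW; OH (HRow 0 0); OH (HRow 1 0); OH (HRow 2 0); OH (HCol 0 0); OH (HCol 1 0); OH (HCol 2 0)]);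
  (1, [:: OH (HBand 3); OH (HRow 0 0); OH (HRow 1 0); OH (HRow 2 0); OH (HCol 0 0); OH (HCol 1 0); OH (HCol 2 0); OH (HPil 1); OH (HRow 0 2); OH (HRow 1 2); OH (HRow 2 2); OH (HCol 0 0); OH (HCol 1 0); OH (HCol 2 0); OS SW; OH (HRow 0 0); OH (HRow 1 0); OH (HRow 2 0); OH (HCol 0 0); OH (HCol 1 0); OH (HCol 2 0)]);
  (1, [:: OH (HPil 1); OH (HRow 0 2); OH (HRow 1 2); OH (HRow 2 2); OH (HCol 0 0); OH (HCol 1 0); OH (HCol 2 0); OS SW; OH (HRow 0 0); OH (HRow 1 0); OH (HRow 2 0); OH (HCol 0 0); OH (HCol 1 0); OH (HCol 2 0)]);
  (1, [:: OH (HBand 3); OH (HRow 0 0); OH (HRow 1 0); OH (HRow 2 0); OH (HCol 0 0); OH (HCol 1 0); OH (HCol 2 0); OH (HPil 2); OH (HRow 0 1); OH (HRow 1 1); OH (HRow 2 1); OH (HCol 0 0); OH (HCol 1 0); OH (HCol 2 0); OS SW; OH (HRow 0 0); OH (HRow 1 0); OH (HRow 2 0); OH (HCol 0 0); OH (HCol 1 0); OH (HCol 2 0)]);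
  (1, [:: OH (HBand 3); OH (HRow 0 0); OH (HRow 1 0); OH (HRow 2 0); OH (HCol 0 0); OH (HCol 1 0); OH (HCol 2 0); OS SW; OH (HRow 0 0); OH (HRow 1 0); OH (HRow 2 0); OH (HCol 0 0); OH (HCol 1 0); OH (HCol 2 0)]);
  (0, [:: OH (HBand 3); OH (HRow 0 0); OH (HRow 1 0); OH (HRow 2 0); OH (HCol 0 0); OH (HCol 1 0); OH (HCol 2 0); OS SW; OH (HRow 0 0); OH (HRow 1 0); OH (HRow 2 0); OH (HCol 0 0); OH (HCol 1 0); OH (HCol 2 0)]);
  (1, [:: OH HTr; OH (HRow 0 0); OH (HRow 1 0); OH (HRow 2 0); OH (HCol 0 0); OH (HCol 1 0); OH (HCol 2 0)]);
  (2, [:: OH HTr; OH (HRow 0 0); OH (HRow 1 0); OH (HRow 2 0); OH (HCol 0 0); OH (HCol 1 0); OH (HCol 2 0)]);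
  (2, [:: OH (HBand 2); OH (HRow 0 0); OH (HRow 1 0); OH (HRow 2 0); OH (HCol 0 1); OH (HCol 1 1); OH (HCol 2 2); OH HTr; OH (HRow 0 0); OH (HRow 1 0); OH (HRow 2 0); OH (HCol 0 0); OH (HCol 1 0); OH (HCol 2 0)]);
  (2, [:: OH (HBand 1); OH (HRow 0 0); OH (HRow 1 0); OH (HRow 2 0); OH (HCol 0 2); OH (HCol 1 2); OH (HCol 2 1); OH (HPil 5); OH (HRow 0 2); OH (HRow 1 1); OH (HRow 2 1); OH (HCol 0 0); OH (HCol 1 0); OH (HCol 2 0); OH HTr; OH (HRow 0 0); OH (HRow 1 0); OH (HRow 2 0); OH (HCol 0 0); OH (HCol 1 0); OH (HCol 2 0)]);
  (2, [:: OH (HBand 1); OH (HRow 0 0); OH (HRow 1 0); OH (HRow 2 0); OH (HCol 0 2); OH (HCol 1 2); OH (HCol 2 1); OH HTr; OH (HRow 0 0); OH (HRow 1 0); OH (HRow 2 0); OH (HCol 0 0); OH (HCol 1 0); OH (HCol 2 0)]);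
  (2, [:: OH (HBand 2); OH (HRow 0 0); OH (HRow 1 0); OH (HRow 2 0); OH (HCol 0 1); OH (HCol 1 1); OH (HCol 2 2); OH (HPil 5); OH (HRow 0 1); OH (HRow 1 2); OH (HRow 2 1); OH (HCol 0 0); OH (HCol 1 0); OH (HCol 2 0); OH HTr; OH (HRow 0 0); OH (HRow 1 0); OH (HRow 2 0); OH (HCol 0 0); OH (HCol 1 0); OH (HCol 2 0)]);
  (2, [:: OH (HBand 5); OH (HRow 0 0); OH (HRow 1 0); OH (HRow 2 0); OH (HCol 0 1); OH (HCol 1 1); OH (HCol 2 2); OS SW; OH (HRow 0 0); OH (HRow 1 0); OH (HRow 2 0); OH (HCol 0 0); OH (HCol 1 0); OH (HCol 2 0)]);
  (1, [:: OH (HPil 5); OH (HRow 0 1); OH (HRow 1 1); OH (HRow 2 1); OH (HCol 0 0); OH (HCol 1 0); OH (HCol 2 0); OH HTr; OH (HRow 0 0); OH (HRow 1 0); OH (HRow 2 0); OH (HCol 0 0); OH (HCol 1 0); OH (HCol 2 0)]);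
  (1, [:: OH (HPil 2); OH (HRow 0 1); OH (HRow 1 1); OH (HRow 2 1); OH (HCol 0 0); OH (HCol 1 0); OH (HCol 2 0); OH HTr; OH (HRow 0 0); OH (HRow 1 0); OH (HRow 2 0); OH (HCol 0 0); OH (HCol 1 0); OH (HCol 2 0)]);
  (2, [:: OH (HBand 2); OH (HRow 0 0); OH (HRow 1 0); OH (HRow 2 0); OH (HCol 0 1); OH (HCol 1 1); OH (HCol 2 2); OS SW; OH (HRow 0 0); OH (HRow 1 0); OH (HRow 2 0); OH (HCol 0 0); OH (HCol 1 0); OH (HCol 2 0)]);
  (2, [:: OH (HBand 2); OH (HRow 0 0); OH (HRow 1 0); OH (HRow 2 0); OH (HCol 0 1); OH (HCol 1 1); OH (HCol 2 2); OH (HPil 2); OH (HRow 0 1); OH (HRow 1 2); OH (HRow 2 1); OH (HCol 0 0); OH (HCol 1 0); OH (HCol 2 0); OH HTr; OH (HRow 0 0); OH (HRow 1 0); OH (HRow 2 0); OH (HCol 0 0); OH (HCol 1 0); OH (HCol 2 0)]);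
  (2, [:: OH (HBand 1); OH (HRow 0 0); OH (HRow 1 0); OH (HRow 2 0); OH (HCol 0 2); OH (HCol 1 2); OH (HCol 2 1); OH (HPil 3); OH (HRow 0 0); OH (HRow 1 0); OH (HRow 2 0); OH (HCol 0 0); OH (HCol 1 0); OH (HCol 2 0); OH HTr; OH (HRow 0 0); OH (HRow 1 0); OH (HRow 2 0); OH (HCol 0 0); OH (HCol 1 0); OH (HCol 2 0)]);
  (2, [:: OH (HBand 1); OH (HRow 0 0); OH (HRow 1 0); OH (HRow 2 0); OH (HCol 0 2); OH (HCol 1 2); OH (HCol 2 1); OH (HPil 2); OH (HRow 0 2); OH (HRow 1 1); OH (HRow 2 1); OH (HCol 0 0); OH (HCol 1 0); OH (HCol 2 0); OH HTr; OH (HRow 0 0); OH (HRow 1 0); OH (HRow 2 0); OH (HCol 0 0); OH (HCol 1 0); OH (HCol 2 0)]);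
  (2, [:: OH (HBand 2); OH (HRow 0 0); OH (HRow 1 0); OH (HRow 2 0); OH (HCol 0 1); OH (HCol 1 1); OH (HCol 2 2); OH (HPil 3); OH (HRow 0 0); OH (HRow 1 0); OH (HRow 2 0); OH (HCol 0 0); OH (HCol 1 0); OH (HCol 2 0); OH HTr; OH (HRow 0 0); OH (HRow 1 0); OH (HRow 2 0); OH (HCol 0 0); OH (HCol 1 0); OH (HCol 2 0)]);
  (2, [:: OH (HBand 3); OH (HRow 0 0); OH (HRow 1 0); OH (HRow 2 0); OH (HCol 0 0); OH (HCol 1 0); OH (HCol 2 0); OS SW; OH (HRow 0 0); OH (HRow 1 0); OH (HRow 2 0); OH (HCol 0 0); OH (HCol 1 0); OH (HCol 2 0)]);
  (1, [:: OH (HPil 3); OH (HRow 0 0); OH (HRow 1 0); OH (HRow 2 0); OH (HCol 0 0); OH (HCol 1 0); OH (HCol 2 0); OH HTr; OH (HRow 0 0); OH (HRow 1 0); OH (HRow 2 0); OH (HCol 0 0); OH (HCol 1 0); OH (HCol 2 0)]);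
  (1, [:: OH (HBand 3); OH (HRow 0 0); OH (HRow 1 0); OH (HRow 2 0); OH (HCol 0 0); OH (HCol 1 0); OH (HCol 2 0); OH (HPil 1); OH (HRow 0 2); OH (HRow 1 2); OH (HRow 2 2); OH (HCol 0 0); OH (HCol 1 0); OH (HCol 2 0); OH HTr; OH (HRow 0 0); OH (HRow 1 0); OH (HRow 2 0); OH (HCol 0 0); OH (HCol 1 0); OH (HCol 2 0)]);
  (2, [:: OH (HBand 1); OH (HRow 0 0); OH (HRow 1 0); OH (HRow 2 0); OH (HCol 0 2); OH (HCol 1 2); OH (HCol 2 1); OH (HPil 5); OH (HRow 0 2); OH (HRow 1 1); OH (HRow 2 1); OH (HCol 0 0); OH (HCol 1 0); OH (HCol 2 0); OS SW; OH (HRow 0 0); OH (HRow 1 0); OH (HRow 2 0); OH (HCol 0 0); OH (HCol 1 0); OH (HCol 2 0)]);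
  (2, [:: OH (HBand 1); OH (HRow 0 0); OH (HRow 1 0); OH (HRow 2 0); OH (HCol 0 2); OH (HCol 1 2); OH (HCol 2 1); OH (HPil 3); OH (HRow 0 0); OH (HRow 1 0); OH (HRow 2 0); OH (HCol 0 0); OH (HCol 1 0); OH (HCol 2 0); OS SW; OH (HRow 0 0); OH (HRow 1 0); OH (HRow 2 0); OH (HCol 0 0); OH (HCol 1 0); OH (HCol 2 0)]);
  (2, [:: OH (HBand 4); OH (HRow 0 0); OH (HRow 1 0); OH (HRow 2 0); OH (HCol 0 2); OH (HCol 1 2); OH (HCol 2 1); OH (HPil 4); OH (HRow 0 1); OH (HRow 1 2); OH (HRow 2 2); OH (HCol 0 0); OH (HCol 1 0); OH (HCol 2 0); OH HTr; OH (HRow 0 0); OH (HRow 1 0); OH (HRow 2 0); OH (HCol 0 0); OH (HCol 1 0); OH (HCol 2 0)]);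
  (2, [:: OH (HBand 1); OH (HRow 0 0); OH (HRow 1 0); OH (HRow 2 0); OH (HCol 0 2); OH (HCol 1 2); OH (HCol 2 1); OH (HPil 4); OH (HRow 0 1); OH (HRow 1 2); OH (HRow 2 2); OH (HCol 0 0); OH (HCol 1 0); OH (HCol 2 0); OS SW; OH (HRow 0 0); OH (HRow 1 0); OH (HRow 2 0); OH (HCol 0 0); OH (HCol 1 0); OH (HCol 2 0)]);
  (2, [:: OH (HBand 3); OH (HRow 0 0); OH (HRow 1 0); OH (HRow 2 0); OH (HCol 0 0); OH (HCol 1 0); OH (HCol 2 0); OH (HPil 4); OH (HRow 0 2); OH (HRow 1 1); OH (HRow 2 2); OH (HCol 0 0); OH (HCol 1 0); OH (HCol 2 0); OH HTr; OH (HRow 0 0); OH (HRow 1 0); OH (HRow 2 0); OH (HCol 0 0); OH (HCol 1 0); OH (HCol 2 0)]);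
  (2, [:: OH (HBand 4); OH (HRow 0 0); OH (HRow 1 0); OH (HRow 2 0); OH (HCol 0 2); OH (HCol 1 2); OH (HCol 2 1); OH (HPil 5); OH (HRow 0 2); OH (HRow 1 1); OH (HRow 2 1); OH (HCol 0 0); OH (HCol 1 0); OH (HCol 2 0); OS SW; OH (HRow 0 0); OH (HRow 1 0); OH (HRow 2 0); OH (HCol 0 0); OH (HCol 1 0); OH (HCol 2 0)]);
  (1, [:: OH (HBand 3); OH (HRow 0 0); OH (HRow 1 0); OH (HRow 2 0); OH (HCol 0 0); OH (HCol 1 0); OH (HCol 2 0); OH (HPil 4); OH (HRow 0 2); OH (HRow 1 2); OH (HRow 2 2); OH (HCol 0 0); OH (HCol 1 0); OH (HCol 2 0); OH HTr; OH (HRow 0 0); OH (HRow 1 0); OH (HRow 2 0); OH (HCol 0 0); OH (HCol 1 0); OH (HCol 2 0)]);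
  (1, [:: OH (HPil 1); OH (HRow 0 2); OH (HRow 1 2); OH (HRow 2 2); OH (HCol 0 0); OH (HCol 1 0); OH (HCol 2 0); OH HTr; OH (HRow 0 0); OH (HRow 1 0); OH (HRow 2 0); OH (HCol 0 0); OH (HCol 1 0); OH (HCol 2 0)]);
  (2, [:: OH (HBand 1); OH (HRow 0 0); OH (HRow 1 0); OH (HRow 2 0); OH (HCol 0 2); OH (HCol 1 2); OH (HCol 2 1); OS SW; OH (HRow 0 0); OH (HRow 1 0); OH (HRow 2 0); OH (HCol 0 0); OH (HCol 1 0); OH (HCol 2 0)]);
  (2, [:: OH (HBand 1); OH (HRow 0 0); OH (HRow 1 0); OH (HRow 2 0); OH (HCol 0 2); OH (HCol 1 2); OH (HCol 2 1); OH (HPil 2); OH (HRow 0 2); OH (HRow 1 1); OH (HRow 2 1); OH (HCol 0 0); OH (HCol 1 0); OH (HCol 2 0); OS SW; OH (HRow 0 0); OH (HRow 1 0); OH (HRow 2 0); OH (HCol 0 0); OH (HCol 1 0); OH (HCol 2 0)]);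
  (2, [:: OH (HBand 1); OH (HRow 0 0); OH (HRow 1 0); OH (HRow 2 0); OH (HCol 0 2); OH (HCol 1 2); OH (HCol 2 1); OH (HPil 4); OH (HRow 0 1); OH (HRow 1 2); OH (HRow 2 2); OH (HCol 0 0); OH (HCol 1 0); OH (HCol 2 0); OH HTr; OH (HRow 0 0); OH (HRow 1 0); OH (HRow 2 0); OH (HCol 0 0); OH (HCol 1 0); OH (HCol 2 0)]);
  (2, [:: OH (HBand 1); OH (HRow 0 0); OH (HRow 1 0); OH (HRow 2 0); OH (HCol 0 2); OH (HCol 1 2); OH (HCol 2 1); OH (HPil 1); OH (HRow 0 1); OH (HRow 1 2); OH (HRow 2 2); OH (HCol 0 0); OH (HCol 1 0); OH (HCol 2 0); OH HTr; OH (HRow 0 0); OH (HRow 1 0); OH (HRow 2 0); OH (HCol 0 0); OH (HCol 1 0); OH (HCol 2 0)]);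
  (2, [:: OH (HBand 2); OH (HRow 0 0); OH (HRow 1 0); OH (HRow 2 0); OH (HCol 0 1); OH (HCol 1 1); OH (HCol 2 2); OH (HPil 4); OH (HRow 0 2); OH (HRow 1 1); OH (HRow 2 2); OH (HCol 0 0); OH (HCol 1 0); OH (HCol 2 0); OH HTr; OH (HRow 0 0); OH (HRow 1 0); OH (HRow 2 0); OH (HCol 0 0); OH (HCol 1 0); OH (HCol 2 0)]);
  (2, [:: OH (HBand 4); OH (HRow 0 0); OH (HRow 1 0); OH (HRow 2 0); OH (HCol 0 2); OH (HCol 1 2); OH (HCol 2 1); OS SW; OH (HRow 0 0); OH (HRow 1 0); OH (HRow 2 0); OH (HCol 0 0); OH (HCol 1 0); OH (HCol 2 0)]);
  (1, [:: OH (HPil 4); OH (HRow 0 2); OH (HRow 1 2); OH (HRow 2 2); OH (HCol 0 0); OH (HCol 1 0); OH (HCol 2 0); OH HTr; OH (HRow 0 0); OH (HRow 1 0); OH (HRow 2 0); OH (HCol 0 0); OH (HCol 1 0); OH (HCol 2 0)]);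
  (1, [:: OH (HBand 3); OH (HRow 0 0); OH (HRow 1 0); OH (HRow 2 0); OH (HCol 0 0); OH (HCol 1 0); OH (HCol 2 0); OH (HPil 2); OH (HRow 0 1); OH (HRow 1 1); OH (HRow 2 1); OH (HCol 0 0); OH (HCol 1 0); OH (HCol 2 0); OH HTr; OH (HRow 0 0); OH (HRow 1 0); OH (HRow 2 0); OH (HCol 0 0); OH (HCol 1 0); OH (HCol 2 0)]);
  (2, [:: OH (HBand 2); OH (HRow 0 0); OH (HRow 1 0); OH (HRow 2 0); OH (HCol 0 1); OH (HCol 1 1); OH (HCol 2 2); OH (HPil 5); OH (HRow 0 1); OH (HRow 1 2); OH (HRow 2 1); OH (HCol 0 0); OH (HCol 1 0); OH (HCol 2 0); OS SW; OH (HRow 0 0); OH (HRow 1 0); OH (HRow 2 0); OH (HCol 0 0); OH (HCol 1 0); OH (HCol 2 0)]);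
  (2, [:: OH (HBand 2); OH (HRow 0 0); OH (HRow 1 0); OH (HRow 2 0); OH (HCol 0 1); OH (HCol 1 1); OH (HCol 2 2); OH (HPil 3); OH (HRow 0 0); OH (HRow 1 0); OH (HRow 2 0); OH (HCol 0 0); OH (HCol 1 0); OH (HCol 2 0); OS SW; OH (HRow 0 0); OH (HRow 1 0); OH (HRow 2 0); OH (HCol 0 0); OH (HCol 1 0); OH (HCol 2 0)]);
  (2, [:: OH (HBand 3); OH (HRow 0 0); OH (HRow 1 0); OH (HRow 2 0); OH (HCol 0 0); OH (HCol 1 0); OH (HCol 2 0); OH (HPil 4); OH (HRow 0 2); OH (HRow 1 1); OH (HRow 2 2); OH (HCol 0 0); OH (HCol 1 0); OH (HCol 2 0); OS SW; OH (HRow 0 0); OH (HRow 1 0); OH (HRow 2 0); OH (HCol 0 0); OH (HCol 1 0); OH (HCol 2 0)]);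
  (2, [:: OH (HBand 2); OH (HRow 0 0); OH (HRow 1 0); OH (HRow 2 0); OH (HCol 0 1); OH (HCol 1 1); OH (HCol 2 2); OH (HPil 4); OH (HRow 0 2); OH (HRow 1 1); OH (HRow 2 2); OH (HCol 0 0); OH (HCol 1 0); OH (HCol 2 0); OS SW; OH (HRow 0 0); OH (HRow 1 0); OH (HRow 2 0); OH (HCol 0 0); OH (HCol 1 0); OH (HCol 2 0)]);
  (2, [:: OH (HBand 3); OH (HRow 0 0); OH (HRow 1 0); OH (HRow 2 0); OH (HCol 0 0); OH (HCol 1 0); OH (HCol 2 0); OH (HPil 3); OH (HRow 0 0); OH (HRow 1 0); OH (HRow 2 0); OH (HCol 0 0); OH (HCol 1 0); OH (HCol 2 0); OH HTr; OH (HRow 0 0); OH (HRow 1 0); OH (HRow 2 0); OH (HCol 0 0); OH (HCol 1 0); OH (HCol 2 0)]);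
  (2, [:: OH (HBand 3); OH (HRow 0 0); OH (HRow 1 0); OH (HRow 2 0); OH (HCol 0 0); OH (HCol 1 0); OH (HCol 2 0); OH (HPil 5); OH (HRow 0 1); OH (HRow 1 2); OH (HRow 2 1); OH (HCol 0 0); OH (HCol 1 0); OH (HCol 2 0); OS SW; OH (HRow 0 0); OH (HRow 1 0); OH (HRow 2 0); OH (HCol 0 0); OH (HCol 1 0); OH (HCol 2 0)]);
  (1, [:: OH (HBand 3); OH (HRow 0 0); OH (HRow 1 0); OH (HRow 2 0); OH (HCol 0 0); OH (HCol 1 0); OH (HCol 2 0); OH (HPil 3); OH (HRow 0 0); OH (HRow 1 0); OH (HRow 2 0); OH (HCol 0 0); OH (HCol 1 0); OH (HCol 2 0); OH HTr; OH (HRow 0 0); OH (HRow 1 0); OH (HRow 2 0); OH (HCol 0 0); OH (HCol 1 0); OH (HCol 2 0)]);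
  (1, [:: OH (HBand 3); OH (HRow 0 0); OH (HRow 1 0); OH (HRow 2 0); OH (HCol 0 0); OH (HCol 1 0); OH (HCol 2 0); OH HTr; OH (HRow 0 0); OH (HRow 1 0); OH (HRow 2 0); OH (HCol 0 0); OH (HCol 1 0); OH (HCol 2 0)]);
  (2, [:: OH (HBand 5); OH (HRow 0 0); OH (HRow 1 0); OH (HRow 2 0); OH (HCol 0 1); OH (HCol 1 1); OH (HCol 2 2); OH HTr; OH (HRow 0 0); OH (HRow 1 0); OH (HRow 2 0); OH (HCol 0 0); OH (HCol 1 0); OH (HCol 2 0)]);
  (2, [:: OH (HBand 3); OH (HRow 0 0); OH (HRow 1 0); OH (HRow 2 0); OH (HCol 0 0); OH (HCol 1 0); OH (HCol 2 0); OH HTr; OH (HRow 0 0); OH (HRow 1 0); OH (HRow 2 0); OH (HCol 0 0); OH (HCol 1 0); OH (HCol 2 0)]);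
  (2, [:: OH (HBand 4); OH (HRow 0 0); OH (HRow 1 0); OH (HRow 2 0); OH (HCol 0 2); OH (HCol 1 2); OH (HCol 2 1); OH (HPil 5); OH (HRow 0 2); OH (HRow 1 1); OH (HRow 2 1); OH (HCol 0 0); OH (HCol 1 0); OH (HCol 2 0); OH HTr; OH (HRow 0 0); OH (HRow 1 0); OH (HRow 2 0); OH (HCol 0 0); OH (HCol 1 0); OH (HCol 2 0)]);
  (2, [:: OH (HBand 4); OH (HRow 0 0); OH (HRow 1 0); OH (HRow 2 0); OH (HCol 0 2); OH (HCol 1 2); OH (HCol 2 1); OH HTr; OH (HRow 0 0); OH (HRow 1 0); OH (HRow 2 0); OH (HCol 0 0); OH (HCol 1 0); OH (HCol 2 0)]);
  (2, [:: OH (HBand 3); OH (HRow 0 0); OH (HRow 1 0); OH (HRow 2 0); OH (HCol 0 0); OH (HCol 1 0); OH (HCol 2 0); OH (HPil 5); OH (HRow 0 1); OH (HRow 1 2); OH (HRow 2 1); OH (HCol 0 0); OH (HCol 1 0); OH (HCol 2 0); OH HTr; OH (HRow 0 0); OH (HRow 1 0); OH (HRow 2 0); OH (HCol 0 0); OH (HCol 1 0); OH (HCol 2 0)]);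
  (2, [:: OH (HBand 5); OH (HRow 0 0); OH (HRow 1 0); OH (HRow 2 0); OH (HCol 0 1); OH (HCol 1 1); OH (HCol 2 2); OH (HPil 5); OH (HRow 0 1); OH (HRow 1 1); OH (HRow 2 2); OH (HCol 0 0); OH (HCol 1 0); OH (HCol 2 0); OH HTr; OH (HRow 0 0); OH (HRow 1 0); OH (HRow 2 0); OH (HCol 0 0); OH (HCol 1 0); OH (HCol 2 0)]);
  (1, [:: OH (HBand 3); OH (HRow 0 0); OH (HRow 1 0); OH (HRow 2 0); OH (HCol 0 0); OH (HCol 1 0); OH (HCol 2 0); OH (HPil 5); OH (HRow 0 1); OH (HRow 1 1); OH (HRow 2 1); OH (HCol 0 0); OH (HCol 1 0); OH (HCol 2 0); OH HTr; OH (HRow 0 0); OH (HRow 1 0); OH (HRow 2 0); OH (HCol 0 0); OH (HCol 1 0); OH (HCol 2 0)]);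
  (0, [:: OH (HBand 3); OH (HRow 0 0); OH (HRow 1 0); OH (HRow 2 0); OH (HCol 0 0); OH (HCol 1 0); OH (HCol 2 0); OH HTr; OH (HRow 0 0); OH (HRow 1 0); OH (HRow 2 0); OH (HCol 0 0); OH (HCol 1 0); OH (HCol 2 0)]);
  (1, [:: OH (HPil 5); OH (HRow 0 1); OH (HRow 1 1); OH (HRow 2 1); OH (HCol 0 0); OH (HCol 1 0); OH (HCol 2 0); OS SW; OH (HRow 0 0); OH (HRow 1 0); OH (HRow 2 0); OH (HCol 0 0); OH (HCol 1 0); OH (HCol 2 0)]);
  (1, [:: OH (HPil 3); OH (HRow 0 0); OH (HRow 1 0); OH (HRow 2 0); OH (HCol 0 0); OH (HCol 1 0); OH (HCol 2 0); OS SW; OH (HRow 0 0); OH (HRow 1 0); OH (HRow 2 0); OH (HCol 0 0); OH (HCol 1 0); OH (HCol 2 0)]);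
  (1, [:: OH (HBand 3); OH (HRow 0 0); OH (HRow 1 0); OH (HRow 2 0); OH (HCol 0 0); OH (HCol 1 0); OH (HCol 2 0); OH (HPil 4); OH (HRow 0 2); OH (HRow 1 2); OH (HRow 2 2); OH (HCol 0 0); OH (HCol 1 0); OH (HCol 2 0); OS SW; OH (HRow 0 0); OH (HRow 1 0); OH (HRow 2 0); OH (HCol 0 0); OH (HCol 1 0); OH (HCol 2 0)]);
  (1, [:: OH (HPil 4); OH (HRow 0 2); OH (HRow 1 2); OH (HRow 2 2); OH (HCol 0 0); OH (HCol 1 0); OH (HCol 2 0); OS SW; OH (HRow 0 0); OH (HRow 1 0); OH (HRow 2 0); OH (HCol 0 0); OH (HCol 1 0); OH (HCol 2 0)]);
  (1, [:: OH (HBand 3); OH (HRow 0 0); OH (HRow 1 0); OH (HRow 2 0); OH (HCol 0 0); OH (HCol 1 0); OH (HCol 2 0); OH (HPil 3); OH (HRow 0 0); OH (HRow 1 0); OH (HRow 2 0); OH (HCol 0 0); OH (HCol 1 0); OH (HCol 2 0); OS SW; OH (HRow 0 0); OH (HRow 1 0); OH (HRow 2 0); OH (HCol 0 0); OH (HCol 1 0); OH (HCol 2 0)]);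
  (1, [:: OH (HBand 3); OH (HRow 0 0); OH (HRow 1 0); OH (HRow 2 0); OH (HCol 0 0); OH (HCol 1 0); OH (HCol 2 0); OH (HPil 5); OH (HRow 0 1); OH (HRow 1 1); OH (HRow 2 1); OH (HCol 0 0); OH (HCol 1 0); OH (HCol 2 0); OS SW; OH (HRow 0 0); OH (HRow 1 0); OH (HRow 2 0); OH (HCol 0 0); OH (HCol 1 0); OH (HCol 2 0)]);
  (0, [:: OH (HBand 3); OH (HRow 0 0); OH (HRow 1 0); OH (HRow 2 0); OH (HCol 0 0); OH (HCol 1 0); OH (HCol 2 0); OH (HPil 3); OH (HRow 0 0); OH (HRow 1 0); OH (HRow 2 0); OH (HCol 0 0); OH (HCol 1 0); OH (HCol 2 0); OH HTr; OH (HRow 0 0); OH (HRow 1 0); OH (HRow 2 0); OH (HCol 0 0); OH (HCol 1 0); OH (HCol 2 0)])].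
Definition repkeys : seq (bool * bool * bool * bool * bool * bool * bool) := [:: (false, false, false, false, false, false, false); (false, false, false, false, false, false, true); (false, false, false, true, false, false, true)].
Definition B2 := [:: false; true].
Definition allkeys : seq (bool * bool * bool * bool * bool * bool * bool) :=
  flatten (flatten (flatten (flatten (flatten
  [seq [seq [seq [seq [seq [seq (e, s0, s1, s2, t0, t1, t2) | t2 <- B2] | t1 <- B2] | t0 <- B2]
     | s2 <- B2] | s1 <- B2] | s0 <- B2, e <- B2])))).
Definition kdef : bool * bool * bool * bool * bool * bool * bool := (false, false, false, false, false, false, false).
Definition final_ok : bool :=
  all (fun k => let: (i, ops) := nth (0, [::]) Wtab (keyn k) in
     (i < 3) && all (fun x => rapply ops (CBraw (nth kdef repkeys i)) x == CBraw k x) cellsL) allkeys.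
Lemma final_ok_ok : final_ok. Proof. by vm_compute. Qed.

Lemma pfn_mod k i : pfn k i = pfn (k %% 6) i.
Proof. by rewrite /pfn modn_mod. Qed.
Lemma inv6_mod k : inv6 k = inv6 (k %% 6).
Proof. by rewrite /inv6 modn_mod. Qed.
Lemma mod6_in k : k %% 6 \in iota 0 6.
Proof. by rewrite mem_iota add0n ltn_mod. Qed.
Lemma lt3_in i : i < 3 -> i \in iota3.
Proof. by case: i => [|[|[|i]]]. Qed.

Definition pfn_facts : bool :=
  all (fun k => all (fun i => [&& pfn k i < 3, pfn k (pfn (inv6 k) i) == i,
                                  pfn (inv6 k) (pfn k i) == i & inv6 k < 6]) iota3) (iota 0 6).
Lemma pfn_facts_ok : pfn_facts. Proof. by vm_compute. Qed.

Lemma pfnF k i : i < 3 -> [&& pfn k i < 3, pfn k (pfn (inv6 k) i) == i,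
                                  pfn (inv6 k) (pfn k i) == i & inv6 k < 6].
Proof.
move=> Hi; have := allP pfn_facts_ok _ (mod6_in k) => /allP /(_ i (lt3_in Hi)).
by rewrite -inv6_mod -!pfn_mod.
Qed.
Lemma pfn_lt k i : i < 3 -> pfn k i < 3.
Proof. by move=> /(pfnF k) /and4P []. Qed.
Lemma pfn_invK k i : i < 3 -> pfn k (pfn (inv6 k) i) = i.
Proof. by move=> /(pfnF k) /and4P [_ /eqP]. Qed.
Lemma pfn_Kinv k i : i < 3 -> pfn (inv6 k) (pfn k i) = i.
Proof. by move=> /(pfnF k) /and4P [_ _ /eqP]. Qed.

Lemma val_p3f k i : val (p3f k i) = pfn k i.
Proof. by rewrite /p3f ord3_val // pfn_lt. Qed.
Lemma p3f_inj k : injective (p3f k).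
Proof.
move=> i j E; have := congr1 val E; rewrite !val_p3f => E2.
apply: val_inj => /=.
by rewrite -(pfn_Kinv k (ltn_ord i)) -(pfn_Kinv k (ltn_ord j)) E2.
Qed.
Definition p3 (k : nat) : {perm 'I_3} := perm (@p3f_inj k).
Lemma p3E k i : p3 k i = p3f k i. Proof. by rewrite permE. Qed.
Lemma p3_inv k i : ((p3 k)^-1)%g i = p3f (inv6 k) i.
Proof.
apply: (@perm_inj _ (p3 k)); rewrite permKV p3E; apply: val_inj.
by rewrite !val_p3f pfn_invK.
Qed.

Definition hperm (g : hgen) : {perm cell} :=
  match g with
  | HBand k => band_perm (p3 k)
  | HRow b k => rowin_perm (ord3 b) (p3 k)
  | HPil k => pillar_perm (p3 k)
  | HCol p k => colin_perm (ord3 p) (p3 k)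
  | HTr => transpose_perm
  end.

Lemma hperm_H9 g : hperm g \in H9.
Proof.
apply: mem_gen; rewrite /H9_gens; case: g => [k|b k|k|p k|] /=.
- by apply/setUP; left; apply/setUP; left; apply/setUP; left; apply/setUP; left; apply/imsetP; exists (p3 k).
- by apply/setUP; left; apply/setUP; left; apply/setUP; left; apply/setUP; right; apply/imsetP; exists (ord3 b, p3 k).
- by apply/setUP; left; apply/setUP; left; apply/setUP; right; apply/imsetP; exists (p3 k).
- by apply/setUP; left; apply/setUP; right; apply/imsetP; exists (ord3 p, p3 k).
- by apply/setUP; right; rewrite inE.
Qed.

Lemma rearr_hperm g B x : rearrange (hperm g) B x = B (hinvf g x).
Proof.
rewrite rearrE; case: g => [k|b k|k|p k|] /=.
- by rewrite band_invE p3_inv.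
- by rewrite rowin_invE p3_inv.
- by rewrite pillar_invE p3_inv.
- by rewrite colin_invE p3_inv.
- by rewrite transp_invE.
Qed.

Lemma psin0_lt i j : psin0 i j < 9.
Proof.
rewrite /psin0; have := ltn_pmod (2 * j + i) (isT : 0 < 3).
have := ltn_pmod (2 * i + 2 * j) (isT : 0 < 3).
move: ((2 * j + i) %% 3) ((2 * i + 2 * j) %% 3) => a b; lia.
Qed.
Lemma sfn_lt s y : sfn s y < 9.
Proof. by case: s => [k|k|] /=; apply: psin0_lt. Qed.

Definition canon (s : sgen) : sgen :=
  match s with SA k => SA (k %% 6) | SB k => SB (k %% 6) | SW => SW end.
Lemma sfn_canon s y : sfn s y = sfn (canon s) y.
Proof. by case: s => [k|k|] /=; rewrite -?pfn_mod. Qed.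
Definition sg_ok (s : sgen) : bool :=
  all (fun x => all (fun y => (sfn s x == sfn s y) ==> (x == y)) L9) L9
  && all (fun q => map (sfn s) q \in SQ) SQ.
Lemma sg_ok_all : all (fun k => sg_ok (SA k) && sg_ok (SB k)) (iota 0 6) && sg_ok SW.
Proof. by vm_compute. Qed.
Lemma sg_okP s : sg_ok (canon s).
Proof.
have /andP [/allP H HW] := sg_ok_all.
case: s => [k|k|]; rewrite /canon.
- by case/andP: (H _ (mod6_in k)).
- by case/andP: (H _ (mod6_in k)).
- exact: HW.
Qed.

Definition sfun (s : sgen) (y : 'I_9) : 'I_9 := inord (sfn s y).
Lemma val_sfun s y : val (sfun s y) = sfn s y.
Proof. by apply: inordK; apply: sfn_lt. Qed.
Lemma sfun_inj s : injective (sfun s).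
Proof.
move=> x y E; have := congr1 val E; rewrite !val_sfun !(sfn_canon s) => E2.
have /andP [/allP H _] := sg_okP s.
have Hx : val x \in L9 by rewrite mem_iota add0n ltn_ord.
have Hy : val y \in L9 by rewrite mem_iota add0n ltn_ord.
have := allP (H _ Hx) _ Hy; rewrite E2 eqxx /= => /eqP; exact: val_inj.
Qed.
Definition sperm (s : sgen) : {perm 'I_9} := perm (@sfun_inj s).
Lemma val_sperm s y : val (sperm s y) = sfn s y.
Proof. by rewrite permE val_sfun. Qed.

Lemma set_relab (T : finType) (s : {perm 'I_9}) (f : T -> 'I_9) v :
  [set x | s (f x) == v] = [set x | f x == (s^-1)%g v].
Proof.
apply/setP => x; rewrite !inE; apply/eqP/eqP => [<-|->]; by rewrite ?permK ?permKV.
Qed.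

Lemma sudoku_relab s B : sudoku B -> sudoku (relabel s B).
Proof.
move=> /andP [/andP [H1 H2] H3]; apply/andP; split; [apply/andP; split|].
- apply/forallP => R; apply/forallP => v.
  have -> : [set C | relabel s B (R, C) == v] = [set C | s (B (R, C)) == v].
    by apply/setP => C; rewrite !inE ffunE.
  by rewrite set_relab; move/forallP: H1 => /(_ R) /forallP /(_ ((s^-1)%g v)).
- apply/forallP => C; apply/forallP => v.
  have -> : [set R | relabel s B (R, C) == v] = [set R | s (B (R, C)) == v].
    by apply/setP => R; rewrite !inE ffunE.
  by rewrite set_relab; move/forallP: H2 => /(_ C) /forallP /(_ ((s^-1)%g v)).
- apply/forallP => b; apply/forallP => p; apply/forallP => v.
  have -> : [set rc : 'I_3 * 'I_3 | relabel s B ((b, rc.1), (p, rc.2)) == v]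
          = [set rc | s (B ((b, rc.1), (p, rc.2))) == v].
    by apply/setP => C; rewrite !inE ffunE.
  by rewrite set_relab; move/forallP: H3 => /(_ b) /forallP /(_ p) /forallP /(_ ((s^-1)%g v)).
Qed.

Lemma sum3 (F : 'I_3 -> nat) : \sum_(c < 3) F c = F o0 + F o1 + F o2.
Proof.
rewrite !big_ord_recl big_ord0 addn0 addnA.
by congr (F _ + F _ + F _); apply: val_inj.
Qed.

Definition blk (B : board) (b p : 'I_3) : seq nat :=
  [seq val (B ((b, rc.1), (p, rc.2))) | rc <- [seq (i, j) | i <- I3s, j <- I3s]].

Lemma chk9_use (x0 x1 x2 x3 x4 x5 x6 x7 x8 : nat) :
  all (fun x => x < 9) [:: x0; x1; x2; x3; x4; x5; x6; x7; x8] ->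
  uniq [:: x0; x1; x2; x3; x4; x5; x6; x7; x8] ->
  [&& x0 + x1 + x2 == 12, x3 + x4 + x5 == 12, x6 + x7 + x8 == 12,
      x0 + x3 + x6 == 12, x1 + x4 + x7 == 12 & x2 + x5 + x8 == 12] ->
  [:: x0; x1; x2; x3; x4; x5; x6; x7; x8] \in SQ.
Proof.
move=> Hall U /and3P [s0 s1 /and3P [s2 c0 /andP [c1 c2]]].
have /and3P [h0 h1 /and3P [h2 h3 /and3P [h4 h5 /and3P [h6 h7 /andP [h8 _]]]]] := Hall.
have m x : x < 9 -> x \in L9 by rewrite mem_iota add0n.
have d01 : x0 != x1 by apply: contraTneq U => ->; rewrite /= !inE !eqxx ?orbT.
have d02 : x0 != x2 by apply: contraTneq U => ->; rewrite /= !inE !eqxx ?orbT.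
have d12 : x1 != x2 by apply: contraTneq U => ->; rewrite /= !inE !eqxx ?orbT ?andbF.
have d34 : x3 != x4 by apply: contraTneq U => ->; rewrite /= !inE !eqxx ?orbT ?andbF.
have d35 : x3 != x5 by apply: contraTneq U => ->; rewrite /= !inE !eqxx ?orbT ?andbF.
have d45 : x4 != x5 by apply: contraTneq U => ->; rewrite /= !inE !eqxx ?orbT ?andbF.
have d67 : x6 != x7 by apply: contraTneq U => ->; rewrite /= !inE !eqxx ?orbT ?andbF.
have d68 : x6 != x8 by apply: contraTneq U => ->; rewrite /= !inE !eqxx ?orbT ?andbF.
have d78 : x7 != x8 by apply: contraTneq U => ->; rewrite /= !inE !eqxx ?orbT ?andbF.
have U6 : uniq [:: x0; x1; x2; x3; x4; x5].
  by move: U; rewrite -[X in uniq X]/([:: x0; x1; x2; x3; x4; x5] ++ [:: x6; x7; x8]) cat_uniq => /and3P [].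
move: chk9_ok; rewrite /chk9.
move=> /allP /(_ x0 (m _ h0)) /allP /(_ x1 (m _ h1)) /allP /(_ x2 (m _ h2)).
have -> : r3ok x0 x1 x2 by rewrite /r3ok d01 d02 d12 s0.
move=> /allP /(_ x3 (m _ h3)) /allP /(_ x4 (m _ h4)) /allP /(_ x5 (m _ h5)).
have -> : r3ok x3 x4 x5 && uniq [:: x0; x1; x2; x3; x4; x5] by rewrite /r3ok d34 d35 d45 s1 U6.
move=> /allP /(_ x6 (m _ h6)) /allP /(_ x7 (m _ h7)) /allP /(_ x8 (m _ h8)).
have -> : [&& uniq [:: x0; x1; x2; x3; x4; x5; x6; x7; x8], r3ok x6 x7 x8,
         x0 + x3 + x6 == 12, x1 + x4 + x7 == 12 & x2 + x5 + x8 == 12].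
  by rewrite /r3ok d67 d68 d78 s2 c0 c1 c2 U.
done.
Qed.

Lemma blk_explicit B b p : blk B b p =
  [:: val (B ((b, o0), (p, o0))); val (B ((b, o0), (p, o1))); val (B ((b, o0), (p, o2)));
      val (B ((b, o1), (p, o0))); val (B ((b, o1), (p, o1))); val (B ((b, o1), (p, o2)));
      val (B ((b, o2), (p, o0))); val (B ((b, o2), (p, o1))); val (B ((b, o2), (p, o2)))].
Proof. by []. Qed.

Definition rcL : seq ('I_3 * 'I_3) := [seq (i, j) | i <- I3s, j <- I3s].
Lemma rcL_uniq : uniq rcL. Proof. by []. Qed.

Lemma semimagic_blk B b p : semimagic B -> blk B b p \in SQ.
Proof.
move=> /andP [/andP [Hs Hr] Hc].
pose f := fun rc : 'I_3 * 'I_3 => val (B ((b, rc.1), (p, rc.2))).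
have finj : injective f.
  move=> rc1 rc2 E; move: Hs => /andP [_ /forallP /(_ b) /forallP /(_ p) /forallP
     /(_ (B ((b, rc1.1), (p, rc1.2)))) /cards1P [x Hx]].
  have h1 : rc1 \in [set x] by rewrite -Hx inE.
  have h2 : rc2 \in [set x].
    by rewrite -Hx inE; apply/eqP; apply: val_inj; exact: (esym E).
  by move/set1P: h1 => ->; move/set1P: h2 => ->.
have U : uniq (map f rcL) by rewrite (map_inj_uniq finj) rcL_uniq.
have R r : \sum_(c < 3) val (B ((b, r), (p, c))) == 12.
  by move/forallP: Hr => /(_ b) /forallP /(_ p) /forallP /(_ r).
have C c : \sum_(r < 3) val (B ((b, r), (p, c))) == 12.
  by move/forallP: Hc => /(_ b) /forallP /(_ p) /forallP /(_ c).
rewrite blk_explicit; apply: chk9_use.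
- by rewrite /= !ltn_ord.
- exact: U.
- move: (R o0) (R o1) (R o2) (C o0) (C o1) (C o2); rewrite !sum3.
  by move=> -> -> -> -> -> ->.
Qed.

Lemma blks_semimagic B : sudoku B -> (forall b p, blk B b p \in SQ) -> semimagic B.
Proof.
move=> Hs H; rewrite /semimagic Hs /=.
have HS := allP SQsums_ok.
apply/andP; split; apply/forallP => b; apply/forallP => p; apply/forallP => r;
  have := HS _ (H b p); rewrite blk_explicit /= => /and3P [s0 s1 /and3P [s2 c0 /andP [c1 c2]]];
  rewrite sum3; elim/I3_cases: r => //.
Qed.

Lemma relab_val s B x : val (relabel (sperm s) B x) = sfn s (val (B x)).
Proof. by rewrite ffunE val_sperm. Qed.

Lemma sperm_Ssm s : sperm s \in S_sm.
Proof.
apply/S_smP => B HB; apply: blks_semimagic.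
  by apply: sudoku_relab; case/andP: HB => /andP [].
move=> b p.
have -> : blk (relabel (sperm s) B) b p = map (sfn (canon s)) (blk B b p).
  by rewrite !blk_explicit /= !relab_val !(sfn_canon s).
have /andP [_ /allP H] := sg_okP s.
exact: H _ (semimagic_blk b p HB).
Qed.

Lemma sqf_explicit e k1 k2 : sqf (e, k1, k2) =
  [:: psin e (pfn k1 0) (pfn k2 0); psin e (pfn k1 0) (pfn k2 1); psin e (pfn k1 0) (pfn k2 2);
      psin e (pfn k1 1) (pfn k2 0); psin e (pfn k1 1) (pfn k2 1); psin e (pfn k1 1) (pfn k2 2);
      psin e (pfn k1 2) (pfn k2 0); psin e (pfn k1 2) (pfn k2 1); psin e (pfn k1 2) (pfn k2 2)].
Proof. by []. Qed.

Definition dec (q : seq nat) : bool * nat * nat := nth (false, 0, 0) SQP (index q SQ).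
Lemma dec_ok q : q \in SQ -> sqf (dec q) = q /\ dec q \in SQP.
Proof.
move=> Hq; have Hi : index q SQ < size SQP by rewrite -(size_map sqf) index_mem.
split; last exact: mem_nth.
by rewrite /dec -(nth_map _ (sqf (false, 0, 0))) // nth_index.
Qed.

Lemma blk_eq_pt B b p e k1 k2 : blk B b p = sqf (e, k1, k2) ->
  forall r c : 'I_3, val (B ((b, r), (p, c))) = psin e (pfn k1 r) (pfn k2 c).
Proof.
rewrite blk_explicit sqf_explicit => -[e00 e01 e02 e10 e11 e12 e20 e21 e22] r c.
by elim/I3_cases: r; elim/I3_cases: c.
Qed.

Lemma ord3_nat n : n < 3 -> nat_of_ord (ord3 n) = n.
Proof. exact: ord3_val. Qed.

Lemma in3_lt r : r \in iota3 -> r < 3.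
Proof. by rewrite !inE => /or3P [] /eqP ->. Qed.

Lemma rowpairP e k1 k2 e' k1' k2' : (e, k1, k2) \in SQP -> (e', k1', k2') \in SQP ->
  (forall r c c' : 'I_3, psin e (pfn k1 r) (pfn k2 c) != psin e' (pfn k1' r) (pfn k2' c')) ->
  e = e' /\ forall r : 'I_3, pfn k1 r != pfn k1' r.
Proof.
move=> H1 H2 Hd.
have /implyP H := allP (allP rowpair_ok _ H1) _ H2.
have /andP [/eqP -> /allP Hr] : (e == e') && all (fun r => pfn k1 r != pfn k1' r) iota3.
  apply: H; apply/allP => r /in3_lt Hr; apply/allP => c /in3_lt Hc; apply/allP => c' /in3_lt Hc'.
  by have := Hd (ord3 r) (ord3 c) (ord3 c'); rewrite !ord3_nat.
by split=> // r; apply: Hr; apply: lt3_in.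
Qed.

Lemma colpairP e k1 k2 e' k1' k2' : (e, k1, k2) \in SQP -> (e', k1', k2') \in SQP ->
  (forall c r r' : 'I_3, psin e (pfn k1 r) (pfn k2 c) != psin e' (pfn k1' r') (pfn k2' c)) ->
  e = e' /\ forall c : 'I_3, pfn k2 c != pfn k2' c.
Proof.
move=> H1 H2 Hd.
have /implyP H := allP (allP colpair_ok _ H1) _ H2.
have /andP [/eqP -> /allP Hr] : (e == e') && all (fun c => pfn k2 c != pfn k2' c) iota3.
  apply: H; apply/allP => c /in3_lt Hc; apply/allP => r /in3_lt Hr; apply/allP => r' /in3_lt Hr'.
  by have := Hd (ord3 c) (ord3 r) (ord3 r'); rewrite !ord3_nat.
by split=> // c; apply: Hr; apply: lt3_in.
Qed.

Section Struct.
Variable B : board.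
Hypothesis HB : semimagic B.

Definition parB (b p : 'I_3) := dec (blk B b p).
Definition EB b p := (parB b p).1.1.
Definition K1 b p := (parB b p).1.2.
Definition K2 b p := (parB b p).2.

Lemma Bval b r p c : val (B ((b, r), (p, c))) = psin (EB b p) (pfn (K1 b p) r) (pfn (K2 b p) c).
Proof.
have [E _] := dec_ok (semimagic_blk b p HB).
apply: blk_eq_pt.
have -> : (EB b p, K1 b p, K2 b p) = parB b p by rewrite /EB /K1 /K2; case: (parB b p) => [[]].
by rewrite /parB E.
Qed.

Lemma K_bounds b p : (K1 b p < 6) && (K2 b p < 6).
Proof.
have [_ H] := dec_ok (semimagic_blk b p HB).
exact: (allP SQP_bounds _ H).
Qed.

Lemma row_distinct b r p p' c c' : p != p' -> B ((b, r), (p, c)) != B ((b, r), (p', c')).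
Proof.
move=> Hp; apply/eqP => E.
move: HB => /andP [/andP [/andP [/andP [/forallP /(_ (b, r)) /forallP /(_ (B ((b, r), (p, c)))) /cards1P [x Hx] _] _] _] _].
have h1 : (p, c) \in [set x] by rewrite -Hx inE.
have h2 : (p', c') \in [set x] by rewrite -Hx inE E.
move/set1P: h1 => h1; move/set1P: h2; rewrite -h1 => -[h]; by rewrite h eqxx in Hp.
Qed.

Lemma col_distinct b b' r r' p c : b != b' -> B ((b, r), (p, c)) != B ((b', r'), (p, c)).
Proof.
move=> Hb; apply/eqP => E.
move: HB => /andP [/andP [/andP [/andP [_ /forallP /(_ (p, c)) /forallP /(_ (B ((b, r), (p, c)))) /cards1P [x Hx]] _] _] _].
have h1 : (b, r) \in [set x] by rewrite -Hx inE.
have h2 : (b', r') \in [set x] by rewrite -Hx inE E.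
move/set1P: h1 => h1; move/set1P: h2; rewrite -h1 => -[h]; by rewrite h eqxx in Hb.
Qed.

Lemma all3 (P : pred nat) : P 0 -> P 1 -> P 2 -> all P iota3.
Proof. by move=> h0 h1 h2; apply/and4P. Qed.

Lemma parB_in b p : parB b p \in SQP.
Proof. by have [_ H] := dec_ok (semimagic_blk b p HB). Qed.

Lemma row_pair b p p' : p != p' ->
  EB b p = EB b p' /\ forall r : 'I_3, pfn (K1 b p) r != pfn (K1 b p') r.
Proof.
move=> Hp.
have Hd (r c c' : 'I_3) : psin (EB b p) (pfn (K1 b p) r) (pfn (K2 b p) c)
                      != psin (EB b p') (pfn (K1 b p') r) (pfn (K2 b p') c').
  apply: contra (row_distinct b r c c' Hp) => /eqP E; apply/eqP/val_inj; rewrite !Bval; exact E.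
have := parB_in b p; have := parB_in b p'.
rewrite /EB /K1 /K2 in Hd *; move: (parB b p) (parB b p') Hd => [[e k1] k2] [[e' k1'] k2'] /= Hd H2 H1.
exact: rowpairP H1 H2 Hd.
Qed.

Lemma col_pair b b' p : b != b' ->
  EB b p = EB b' p /\ forall c : 'I_3, pfn (K2 b p) c != pfn (K2 b' p) c.
Proof.
move=> Hb.
have Hd (c r r' : 'I_3) : psin (EB b p) (pfn (K1 b p) r) (pfn (K2 b p) c)
                      != psin (EB b' p) (pfn (K1 b' p) r') (pfn (K2 b' p) c).
  apply: contra (col_distinct r r' p c Hb) => /eqP E; apply/eqP/val_inj; rewrite !Bval; exact E.
have := parB_in b p; have := parB_in b' p.
rewrite /EB /K1 /K2 in Hd *; move: (parB b p) (parB b' p) Hd => [[e k1] k2] [[e' k1'] k2'] /= Hd H2 H1.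
exact: colpairP H1 H2 Hd.
Qed.
End Struct.

Definition apply_op (o : op) (B : board) : board :=
  match o with OH g => rearrange (hperm g) B | OS s => relabel (sperm s) B end.
Definition apply_ops (ops : seq op) (B : board) : board := foldl (fun B o => apply_op o B) B ops.

Lemma orbit_apply ops B : Gsm_orbit (apply_ops ops B) = Gsm_orbit B.
Proof.
elim: ops B => [|o ops IH] B //=; rewrite IH.
by case: o => [g|s] /=; [apply: orbit_rearr; apply: hperm_H9 | apply: orbit_relab; apply: sperm_Ssm].
Qed.

Lemma apply_val ops (B : board) (R : rawb) : (forall y, val (B y) = R y) ->
  forall x, val (apply_ops ops B x) = rapply ops R x.
Proof.
elim: ops B R => [|o ops IH] B R HR x /=; first exact: HR.
apply: IH => y; case: o => [g|s] /=.
  by rewrite rearr_hperm HR.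
by rewrite relab_val HR.
Qed.

Lemma norm_generic (R : rawb) (k0 k1 k2 m0 m1 m2 : nat) b r p c :
  rapply [:: OH (HRow 0 k0); OH (HRow 1 k1); OH (HRow 2 k2);
             OH (HCol 0 m0); OH (HCol 1 m1); OH (HCol 2 m2)] R ((b, r), (p, c)) =
  R ((b, p3f (inv6 (nth k0 [:: k0; k1; k2] b)) r), (p, p3f (inv6 (nth m0 [:: m0; m1; m2] p)) c)).
Proof. by elim/I3_cases: b; elim/I3_cases: p. Qed.

Lemma mem_cellsL x : x \in cellsL.
Proof.
case: x => [[b r] [p c]]; apply/flattenP.
exists [seq ((b, r), (p', c')) | p' <- I3s, c' <- I3s].
  by apply: (allpairs_f (fun b r => [seq ((b, r), (p', c')) | p' <- I3s, c' <- I3s])); apply: mem_I3s.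
by apply: (allpairs_f (fun p c => ((b, r), (p, c)))); apply: mem_I3s.
Qed.

Lemma allkeys_complete k : k \in allkeys.
Proof. by case: k => [[[[[[e s0] s1] s2] t0] t1] t2]; case: e; case: s0; case: s1; case: s2; case: t0; case: t1; case: t2. Qed.

Lemma psin_lt e i j : psin e i j < 9.
Proof. by case: e; apply: psin0_lt. Qed.

Definition rep (i : nat) : board := [ffun x => inord (CBraw (nth kdef repkeys i) x)].
Lemma rep_val i x : val (rep i x) = CBraw (nth kdef repkeys i) x.
Proof.
rewrite ffunE; apply: inordK.
by case: (nth kdef repkeys i) => [[[[[[e s0] s1] s2] t0] t1] t2]; apply: psin_lt.
Qed.

Lemma latinP k0 k1 k2 : k0 < 6 -> k1 < 6 -> k2 < 6 ->
  (forall r : 'I_3, [&& pfn k0 r != pfn k1 r, pfn k0 r != pfn k2 r & pfn k1 r != pfn k2 r]) ->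
  forall p r : 'I_3, pfn (nth k0 [:: k0; k1; k2] p) (pfn (inv6 k0) r) = Ln (pfn k1 (pfn (inv6 k0) 0) == 2) p r.
Proof.
move=> h0 h1 h2 Hd p r.
have m k : k < 6 -> k \in iota 0 6 by rewrite mem_iota.
have /implyP H := allP (allP (allP latin_ok_ok _ (m _ h0)) _ (m _ h1)) _ (m _ h2).
have /allP Hp : all (fun p => all (fun r =>
          pfn (nth k0 [:: k0; k1; k2] p) (pfn (inv6 k0) r) == Ln (pfn k1 (pfn (inv6 k0) 0) == 2) p r)
          iota3) iota3.
  apply: H; apply/allP => r' /in3_lt Hr; by have := Hd (ord3 r'); rewrite ord3_nat.
by have /allP /(_ _ (lt3_in (ltn_ord r))) /eqP := Hp _ (lt3_in (ltn_ord p)).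
Qed.

Lemma neq01 : o0 != o1. Proof. by apply/eqP => /(congr1 val). Qed.
Lemma neq02 : o0 != o2. Proof. by apply/eqP => /(congr1 val). Qed.
Lemma neq12 : o1 != o2. Proof. by apply/eqP => /(congr1 val). Qed.

Section Norm.
Variable B : board.
Hypothesis HB : semimagic B.

Definition e0 := EB B o0 o0.
Lemma nth3 (f : 'I_3 -> nat) (b : 'I_3) : nth (f o0) [:: f o0; f o1; f o2] b = f b.
Proof. by elim/I3_cases: b. Qed.
Lemma sel3 (f : 'I_3 -> bool) (b : 'I_3) : sel (f o0) (f o1) (f o2) b = f b.
Proof. by elim/I3_cases: b. Qed.
Lemma sig_generic (f : 'I_3 -> nat) : (forall p, f p < 6) ->
  (forall p p', p != p' -> forall r : 'I_3, pfn (f p) r != pfn (f p') r) ->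
  forall p r : 'I_3, pfn (f p) (pfn (inv6 (f o0)) r) = Ln (pfn (f o1) (pfn (inv6 (f o0)) 0) == 2) p r.
Proof.
move=> Hb Hd p r.
have Hd3 (r' : 'I_3) : [&& pfn (f o0) r' != pfn (f o1) r', pfn (f o0) r' != pfn (f o2) r'
                    & pfn (f o1) r' != pfn (f o2) r'].
  by rewrite (Hd _ _ neq01) (Hd _ _ neq02) (Hd _ _ neq12).
rewrite -(nth3 f p); exact: (latinP (Hb o0) (Hb o1) (Hb o2) Hd3 p r).
Qed.
Lemma EB_const b p : EB B b p = e0.
Proof.
have h1 : EB B b p = EB B b o0.
  case: (eqVneq p o0) => [->|Hp]; first reflexivity.
  exact: (proj1 (row_pair HB b Hp)).
have h2 : EB B b o0 = EB B o0 o0.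
  case: (eqVneq b o0) => [->|Hb]; first reflexivity.
  exact: (proj1 (col_pair HB o0 Hb)).
rewrite h1 h2; reflexivity.
Qed.

Definition sb (b : 'I_3) := pfn (K1 B b o1) (pfn (inv6 (K1 B b o0)) 0) == 2.
Definition tp (p : 'I_3) := pfn (K2 B o1 p) (pfn (inv6 (K2 B o0 p)) 0) == 2.


Lemma sigN (b p r : 'I_3) : pfn (K1 B b p) (pfn (inv6 (K1 B b o0)) r) = Ln (sb b) p r.
Proof.
have h1 p' : K1 B b p' < 6 by case/andP: (K_bounds HB b p').
have h2 p1 p2 : p1 != p2 -> forall r : 'I_3, pfn (K1 B b p1) r != pfn (K1 B b p2) r.
  by move=> H; exact: (proj2 (row_pair HB b H)).
rewrite /sb; exact: (@sig_generic (fun p => K1 B b p) h1 h2 p r).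
Qed.

Lemma tauN (b p c : 'I_3) : pfn (K2 B b p) (pfn (inv6 (K2 B o0 p)) c) = Ln (tp p) b c.
Proof.
have h1 b' : K2 B b' p < 6 by case/andP: (K_bounds HB b' p).
have h2 b1 b2 : b1 != b2 -> forall c : 'I_3, pfn (K2 B b1 p) c != pfn (K2 B b2 p) c.
  by move=> H; exact: (proj2 (col_pair HB p H)).
rewrite /tp; exact: (@sig_generic (fun b => K2 B b p) h1 h2 b c).
Qed.

Definition opsN : seq op :=
  [:: OH (HRow 0 (K1 B o0 o0)); OH (HRow 1 (K1 B o1 o0)); OH (HRow 2 (K1 B o2 o0));
      OH (HCol 0 (K2 B o0 o0)); OH (HCol 1 (K2 B o0 o1)); OH (HCol 2 (K2 B o0 o2))].
Definition keyB := (e0, sb o0, sb o1, sb o2, tp o0, tp o1, tp o2).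

Lemma keyval x : val (apply_ops opsN B x) = CBraw keyB x.
Proof.
rewrite (@apply_val opsN B (fun y => val (B y))) //.
case: x => [[b r] [p c]]; rewrite norm_generic; cbv beta; rewrite (Bval HB) EB_const !val_p3f.
rewrite (nth3 (fun b => K1 B b o0)) (nth3 (fun p => K2 B o0 p)) sigN tauN /keyB /CBraw.
rewrite (sel3 (fun b => sb b)) (sel3 (fun p => tp p)).
reflexivity.
Qed.

Lemma orbit_rep : exists2 i, i < 3 & Gsm_orbit B = Gsm_orbit (rep i).
Proof.
have := allP final_ok_ok _ (allkeys_complete keyB).
case E: (nth (0, [::]) Wtab (keyn keyB)) => [i ops] /andP [Hi /allP Hx].
exists i => //.
rewrite -(orbit_apply opsN B) -(orbit_apply ops (rep i)); congr Gsm_orbit.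
apply/ffunP => x; apply: val_inj.
rewrite keyval (@apply_val ops (rep i) (CBraw (nth kdef repkeys i))); last exact: rep_val.
by apply/esym/eqP; apply: Hx; apply: mem_cellsL.
Qed.
End Norm.

Lemma mem_rcL (x : 'I_3 * 'I_3) : x \in rcL.
Proof. by case: x => i j; apply: allpairs_f; apply: mem_I3s. Qed.

Lemma card_rcL (P : pred ('I_3 * 'I_3)) : #|[set x | P x]| = count P rcL.
Proof.
rewrite -size_filter -(card_uniqP (filter_uniq P rcL_uniq)).
by apply: eq_card => x; rewrite inE mem_filter mem_rcL andbT.
Qed.

Definition rawsud (F : rawb) : bool :=
  [&& all (fun R => all (fun v => count (fun C => F (R, C) == v) rcL == 1) L9) rcL,
      all (fun C => all (fun v => count (fun R => F (R, C) == v) rcL == 1) L9) rcL &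
      all (fun b => all (fun p => all (fun v => count (fun rc : 'I_3 * 'I_3 => F ((b, rc.1), (p, rc.2)) == v) rcL == 1) L9) I3s) I3s].

Lemma inL9 (v : 'I_9) : val v \in L9.
Proof. by rewrite mem_iota add0n ltn_ord. Qed.

Lemma rawsud_ok (B : board) (F : rawb) : (forall x, val (B x) = F x) -> rawsud F -> sudoku B.
Proof.
move=> HF /and3P [/allP H1 /allP H2 /allP H3].
have E (x : cell) (v : 'I_9) : (B x == v) = (F x == val v).
  by rewrite -HF; apply/eqP/eqP => [->|/val_inj].
apply/andP; split; [apply/andP; split|].
- apply/forallP => R; apply/forallP => v; rewrite card_rcL.
  rewrite (eq_count (a2 := fun C => F (R, C) == val v)) => [|C]; last exact: E.
  exact: (allP (H1 R (mem_rcL R)) _ (inL9 v)).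
- apply/forallP => C; apply/forallP => v; rewrite card_rcL.
  rewrite (eq_count (a2 := fun R => F (R, C) == val v)) => [|R]; last exact: E.
  exact: (allP (H2 C (mem_rcL C)) _ (inL9 v)).
- apply/forallP => b; apply/forallP => p; apply/forallP => v; rewrite card_rcL.
  rewrite (eq_count (a2 := fun rc : 'I_3 * 'I_3 => F ((b, rc.1), (p, rc.2)) == val v)) => [|rc]; last exact: E.
  exact: (allP (allP (H3 b (mem_I3s b)) p (mem_I3s p)) _ (inL9 v)).
Qed.

Definition rawblk (F : rawb) (b p : 'I_3) : seq nat := [seq F ((b, rc.1), (p, rc.2)) | rc <- rcL].

Lemma rawSM_ok (B : board) (F : rawb) : (forall x, val (B x) = F x) -> rawsud F ->
  all (fun b => all (fun p => rawblk F b p \in SQ) I3s) I3s -> semimagic B.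
Proof.
move=> HF Hs /allP Hb; apply: blks_semimagic; first exact: rawsud_ok HF Hs.
move=> b p; have -> : blk B b p = rawblk F b p by apply: eq_map => rc; apply: HF.
exact: (allP (Hb b (mem_I3s b)) p (mem_I3s p)).
Qed.

Definition teqR (F : rawb) (b' p r' b r : 'I_3) : bool :=
  all (fun c => has (fun c' => F ((b', r'), (p, c)) == F ((b, r), (p, c'))) I3s) I3s &&
  all (fun c => has (fun c' => F ((b, r), (p, c)) == F ((b', r'), (p, c'))) I3s) I3s.

Lemma Tset_eq (B : board) (F : rawb) b' p r' b r : (forall x, val (B x) = F x) ->
  (Tset B b' p r' == Tset B b p r) = teqR F b' p r' b r.
Proof.
move=> HF; rewrite eqEsubset /teqR.
have sub (b1 r1 b2 r2 : 'I_3) : (Tset B b1 p r1 \subset Tset B b2 p r2) =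
   all (fun c => has (fun c' => F ((b1, r1), (p, c)) == F ((b2, r2), (p, c'))) I3s) I3s.
  apply/subsetP/allP => H.
    move=> c _; have Hin : B ((b1, r1), (p, c)) \in Tset B b1 p r1 by apply/imsetP; exists c.
    have /imsetP [c' _ Ec] := H _ Hin.
    apply/hasP; exists c'; first exact: mem_I3s.
    by rewrite -!HF Ec.
  move=> y /imsetP [c _ ->]; have /hasP [c' _ /eqP Ec] := H c (mem_I3s c).
  by apply/imsetP; exists c' => //; apply: val_inj; rewrite !HF.
by rewrite !sub.
Qed.

Definition rawKs (F : rawb) : bool :=
  all (fun b => all (fun b' => all (fun r' => has (fun r => all (fun p => teqR F b' p r' b r) I3s) I3s) I3s) I3s) I3s.

Lemma forallI3 (P : pred 'I_3) : [forall x, P x] = all P I3s.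
Proof. apply/forallP/allP => H x; [move=> _; exact: H | apply: H; exact: mem_I3s]. Qed.
Lemma existsI3 (P : pred 'I_3) : [exists x, P x] = has P I3s.
Proof.
apply/existsP/hasP => [[x Hx]|[x _ Hx]]; last by exists x.
by exists x; rewrite ?mem_I3s.
Qed.

Lemma Ks_raw (B : board) (F : rawb) : (forall x, val (B x) = F x) -> Ks B = rawKs F.
Proof.
move=> HF; rewrite /Ks /compat /rawKs forallI3; apply: eq_all => b.
rewrite forallI3; apply: eq_all => b'; rewrite forallI3; apply: eq_all => r'.
rewrite existsI3; apply: eq_has => r; rewrite forallI3; apply: eq_all => p.
exact: Tset_eq.
Qed.

Definition rep_ok : bool :=
  all (fun i => let F := CBraw (nth kdef repkeys i) in
         rawsud F && all (fun b => all (fun p => rawblk F b p \in SQ) I3s) I3s) (iota 0 3).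
Lemma rep_ok_ok : rep_ok. Proof. by vm_compute. Qed.

Definition inv_raw (i : nat) : nat :=
  let F := CBraw (nth kdef repkeys i) in rawKs F + rawKs (fun x => F (x.2, x.1)).
Lemma inv_raw0 : inv_raw 0 = 2. Proof. by vm_compute. Qed.
Lemma inv_raw1 : inv_raw 1 = 1. Proof. by vm_compute. Qed.
Lemma inv_raw2 : inv_raw 2 = 0. Proof. by vm_compute. Qed.

Lemma Inv_rep i : Inv (rep i) = inv_raw i.
Proof.
rewrite /Inv /inv_raw; cbv zeta; rewrite (@Ks_raw (rep i) (CBraw (nth kdef repkeys i))); last exact: rep_val.
have -> : Ks (trB (rep i)) = rawKs (fun x : cell => CBraw (nth kdef repkeys i) (x.2, x.1)).
  by apply: Ks_raw => x; rewrite /trB rearrE transp_invE rep_val.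
reflexivity.
Qed.

Lemma rep_sm i : i < 3 -> semimagic (rep i).
Proof.
move=> Hi; have Hi' : i \in iota 0 3 by rewrite mem_iota.
have /andP [Hs Hb] := allP rep_ok_ok i Hi'.
exact: (rawSM_ok (rep_val i) Hs Hb).
Qed.

Theorem theorem3p7 :
  #|[set Gsm_orbit B | B in semimagic_boards]| = 3.
Proof.
pose O i := Gsm_orbit (rep i).
have E : [set Gsm_orbit B | B in semimagic_boards] = [set O 0; O 1; O 2].
  apply/setP => X; apply/imsetP/idP.
    move=> [B HB ->]; rewrite inE in HB; have [i Hi ->] := orbit_rep HB.
    by rewrite !inE; case: i Hi => [|[|[|i]]] //= _; rewrite eqxx ?orbT.
  rewrite !inE => /orP [/orP [] | ] /eqP ->.
  - by exists (rep 0); rewrite ?inE ?rep_sm.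
  - by exists (rep 1); rewrite ?inE ?rep_sm.
  - by exists (rep 2); rewrite ?inE ?rep_sm.
have D i j : O i = O j -> inv_raw i = inv_raw j.
  move=> Eij; rewrite -!Inv_rep.
  have H : rep i \in O i by exact: orbit_self.
  rewrite Eij in H; exact: Inv_orbit H.
have v0 := inv_raw0; have v1 := inv_raw1; have v2 := inv_raw2.
have d01 : O 0 != O 1 by apply/eqP => /D; rewrite v0 v1.
have d02 : O 0 != O 2 by apply/eqP => /D; rewrite v0 v2.
have d12 : O 1 != O 2 by apply/eqP => /D; rewrite v1 v2.
rewrite E setUC cardsU1 cards2 !inE (eq_sym (O 2) (O 0)) (eq_sym (O 2) (O 1)).
by rewrite (negbTE d02) (negbTE d12) d01.
Qed.
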